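(* Consider the equation, for an unknown formal power series $U(T,m,\epsilon)$ in $T$, $$Q(im)U(qT,m,\epsilon)=T^{d_{D_1}}R_{D_1}(im)U(q^{\frac{d_{D_1}}{k_1}+1}T,m,\epsilon)+T^{d_{D_2}}R_{D_2}(im)U(q^{\frac{d_{D_2}}{k_2}+1}T,m,\epsilon)$$ $$+\sum_{\ell=1}^{D-1}\epsilon^{\Delta_\ell-d_\ell}T^{d_\ell}\,\sigma_{q,T}^{\delta_\ell}\Big(\frac{1}{(2\pi)^{1/2}}\int_{-\infty}^{+\infty}C_\ell(T,m-m_1,\epsilon)R_\ell(im_1)U(T,m_1,\epsilon)\,dm_1\Big)+\hat F(qT,m,\epsilon).$$ There exists a unique formal power series $\hat U(T,m,\epsilon)=\sum_{n\ge0}U_n(m,\epsilon)T^n$ solving this equation, and its coefficients $U_n(m,\epsilon)$ belong to $E_{(\beta,\mu)}$ (as functions of $m$) and depend holomorphically on $\epsilon\in D(0,\epsilon_0)$.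
   Context: Fix a real $q>1$, integers $1\le k_1<k_2$, and $\kappa$ with $1/\kappa=1/k_1-1/k_2$. Fix integers $D,D_1,D_2\ge3$, positive integers $d_{D_1},d_{D_2}$ and, for $1\le\ell\le D-1$, integers $d_\ell\ge1,\delta_\ell\ge1,\Delta_\ell\ge0$ with $\delta_1=1$, $\delta_\ell<\delta_{\ell+1}$ ($1\le \ell\le D-2$), and for all $1\le\ell\le D-1$: $\Delta_\ell\ge d_\ell$, $d_\ell/k_2+1\ge\delta_\ell$, $(d_{D_1}-1)/\kappa-d_\ell/k_2\ge\delta_\ell-1$, $(d_{D_2}-1)/k_2\ge\delta_\ell-1$; moreover $k_1d_{D_2}>k_2d_{D_1}$. Let $Q,R_{D_1},R_{D_2},R_1,\dots,R_{D-1}\in\mathbb{C}[X]$ with $\deg R_{D_1}=\deg R_{D_2}$, $\deg Q\ge\deg R_{D_j}\ge\deg R_\ell$, $Q(im)\neq0$ and $R_{D_j}(im)\ne0$ for all $m\in\mathbb{R}$, $j=1,2$. Fix $\beta>0$ and $\mu>\deg(R_{D_j})+1$. $E_{(\beta,\mu)}$ is the Banach space of continuous $h:\mathbb{R}\to\mathbb{C}$ with $\|h\|_{(\beta,\mu)}=\sup_m(1+|m|)^\mu e^{\beta|m|}|h(m)|<\infty$. For $\gamma\in\mathbb{R}$, $\sigma_{q,T}^{\gamma}$ is the operator $g(T)\mapsto g(q^\gamma T)$. Let $\epsilon_0>0$. For $n\ge0$, $F_n(m,\epsilon)$ belongs to $E_{(\beta,\mu)}$ in $m$ and depends holomorphically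 on $\epsilon\in D(0,\epsilon_0)$, and there are $C_F,T_0>0$ with $\|F_n\|_{(\beta,\mu)}\le C_F T_0^{-n}(q^{1/k_1})^{n(n-1)/2}$ for all $n\ge0$; $\hat F(T,m,\epsilon)=\sum_{n\ge0}F_n(m,\epsilon)T^n$. For $1\le\ell\le D-1$, $C_\ell(T,m,\epsilon)=\sum_{j=0}^{p_1}C_{\ell,j}(m,\epsilon)T^j$ with $C_{\ell,j}\in E_{(\beta,\mu)}$ in $m$, holomorphic in $\epsilon\in D(0,\epsilon_0)$. *)

(* Defs.v *)
From Stdlib Require Import Reals List.
From Coquelicot Require Import Coquelicot.
Open Scope R_scope.

(** * Polynomials in C[X], as coefficient lists (lowest degree first). *)
Definition peval (p : list C) (z : C) : C :=
  fold_right (fun a acc => (a + z * acc)%C) (RtoC 0) p.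

Definition has_deg (p : list C) (n : nat) : Prop :=
  nth n p (RtoC 0) <> RtoC 0 /\ (forall i, (n < i)%nat -> nth i p (RtoC 0) = RtoC 0).

Definition deg_le (p : list C) (n : nat) : Prop :=
  forall i, (n < i)%nat -> nth i p (RtoC 0) = RtoC 0.

Definition im (m : R) : C := (Ci * RtoC m)%C.

Definition weight (beta mu m : R) : R :=
  Rpower (1 + Rabs m) mu * exp (beta * Rabs m).

Definition wnorm_le (beta mu : R) (h : R -> C) (M : R) : Prop :=
  forall m, weight beta mu m * Cmod (h m) <= M.

Definition inE (beta mu : R) (h : R -> C) : Prop :=
  (forall m, continuous h m) /\ exists M, wnorm_le beta mu h M.

Definition in_disc (eps0 : R) (z : C) : Prop := Cmod z < eps0.

Definition holoE (beta mu eps0 : R) (h : C -> R -> C) : Prop :=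
  forall eps, in_disc eps0 eps ->
    inE beta mu (h eps) /\
    exists h' : R -> C, inE beta mu h' /\
      forall eta, 0 < eta -> exists delta, 0 < delta /\
        forall z : C, z <> RtoC 0 -> Cmod z < delta ->
          wnorm_le beta mu
            (fun m => ((h (eps + z)%C m - h eps m) / z - h' m)%C) eta.

(** * Formal power series in T whose coefficients are functions of m
    (the parameter eps being fixed). Coefficient n of T^n. *)
Definition fps := nat -> R -> C.

Definition fps_add (U V : fps) : fps := fun n m => (U n m + V n m)%C.

(** g(T) |-> g(c T) *)
Definition fps_dil (c : R) (U : fps) : fps := fun n m => (RtoC (c ^ n) * U n m)%C.

Definition sigma_qT (q gamma : R) (U : fps) : fps := fps_dil (Rpower q gamma) U.

Definition fps_mulT (d : nat) (U : fps) : fps :=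
  fun n m => if Nat.leb d n then U (n - d)%nat m else RtoC 0.

Definition fps_mulm (g : R -> C) (U : fps) : fps := fun n m => (g m * U n m)%C.

Definition fps_scal (a : C) (U : fps) : fps := fun n m => (a * U n m)%C.

Definition integ (f : R -> C) : C :=
  (RtoC (/ sqrt (2 * PI)) *
   RInt_gen (V := C_R_CompleteNormedModule) f
     (Rbar_locally m_infty) (Rbar_locally p_infty))%C.

Definition conv_integrand (Cj : nat -> R -> C) (Rl : list C) (U : fps)
    (j p : nat) (m : R) : R -> C :=
  fun m1 => (Cj j (m - m1)%R * peval Rl (im m1) * U p m1)%C.

(** T-coefficients of (2 pi)^(-1/2) int C(T,m-m1) R(im1) U(T,m1) dm1,
    C(T,m) = sum_{j=0}^{p1} Cj j m T^j (Cauchy product in T). *)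
Definition fps_conv (Cj : nat -> R -> C) (p1 : nat) (Rl : list C) (U : fps) : fps :=
  fun n m => sum_n (fun j => if Nat.leb j n
                             then integ (conv_integrand Cj Rl U j (n - j) m)
                             else RtoC 0) p1.

Definition conv_defined (Cj : nat -> R -> C) (p1 : nat) (Rl : list C) (U : fps) : Prop :=
  forall n m j, (j <= p1)%nat -> (j <= n)%nat ->
    ex_RInt_gen (V := C_R_CompleteNormedModule) (conv_integrand Cj Rl U j (n - j) m)
      (Rbar_locally m_infty) (Rbar_locally p_infty).

Definition Cpow (z : C) (n : nat) : C := pow_n (K := C_Ring) z n.

Definition eq_rhs (q : R) (k1 k2 : nat) (D : nat) (dD1 dD2 : nat)
    (d delta Delta : nat -> nat) (RD1 RD2 : list C) (Rl : nat -> list C)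
    (p1 : nat) (Cc : nat -> nat -> R -> C) (Fh : fps) (eps : C) (U : fps) : fps :=
  fps_add
    (fps_mulT dD1 (fps_mulm (fun m => peval RD1 (im m))
       (fps_dil (Rpower q (INR dD1 / INR k1 + 1)) U)))
  (fps_add
    (fps_mulT dD2 (fps_mulm (fun m => peval RD2 (im m))
       (fps_dil (Rpower q (INR dD2 / INR k2 + 1)) U)))
  (fps_add
    (fun n m => sum_n_m (fun l =>
        fps_scal (Cpow eps (Delta l - d l))
          (fps_mulT (d l) (sigma_qT q (INR (delta l))
             (fps_conv (Cc l) p1 (Rl l) U))) n m) 1 (D - 1))
    (fps_dil q Fh))).

Definition eq_lhs (q : R) (Q : list C) (U : fps) : fps :=
  fps_mulm (fun m => peval Q (im m)) (fps_dil q U).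

Definition solves (q : R) (k1 k2 : nat) (D : nat) (dD1 dD2 : nat)
    (d delta Delta : nat -> nat) (Q RD1 RD2 : list C) (Rl : nat -> list C)
    (p1 : nat) (Cc : nat -> nat -> R -> C) (Fh : fps) (eps : C) (U : fps) : Prop :=
  (forall l, (1 <= l <= D - 1)%nat -> conv_defined (Cc l) p1 (Rl l) U) /\
  eq_lhs q Q U = eq_rhs q k1 k2 D dD1 dD2 d delta Delta RD1 RD2 Rl p1 Cc Fh eps U.

(* Main.v *)
Require Import Defs.
From Stdlib Require Import Reals List.
From Coquelicot Require Import Coquelicot.
From Stdlib Require Import Lra Lia FunctionalExtensionality.
Open Scope R_scope.

Definition phi (s x : R) := Rpower (1 + Rabs x) (- s).
Definition tau (s b : R) := Rpower (1 + b) (1 - s) / (s - 1).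

Lemma Rpower_pos' x y : 0 < Rpower x y.
Proof. unfold Rpower; apply exp_pos. Qed.

Lemma phi_pos s x : 0 < phi s x.
Proof. apply Rpower_pos'. Qed.

Lemma tau_pos s b : 1 < s -> 0 < tau s b.
Proof. intros; unfold tau; apply Rdiv_lt_0_compat; [apply Rpower_pos'|lra]. Qed.

Lemma is_derive_mtau s x : 1 < s -> 0 <= x ->
  is_derive (fun y => - tau s y) x (Rpower (1 + x) (- s)).
Proof.
  intros Hs Hx. unfold tau, Rpower.
  auto_derive. lra.
  replace (exp ((1 - s) * ln (1 + x))) with (exp (- s * ln (1+x)) * (1 + x)).
  field. lra.
  replace ((1 - s) * ln (1 + x)) with (- s * ln (1+x) + ln (1+x)) by ring.
  rewrite exp_plus, exp_ln by lra. reflexivity.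
Qed.

Lemma is_RInt_phi_pos s b b' : 1 < s -> 0 <= b <= b' ->
  is_RInt (phi s) b b' (tau s b - tau s b').
Proof.
  intros Hs Hb.
  apply is_RInt_ext with (f := fun x => Rpower (1 + x) (- s)).
  { intros x Hx. unfold phi. rewrite Rmin_left in Hx by lra.
    rewrite Rmax_right in Hx by lra. rewrite Rabs_pos_eq by lra. reflexivity. }
  assert (H : is_RInt (V := R_CompleteNormedModule) (fun x => Rpower (1 + x) (- s)) b b'
     (minus ((fun x => - tau s x) b') ((fun x => - tau s x) b))).
  { apply (is_RInt_derive (V := R_CompleteNormedModule) (fun x => - tau s x)).
    - intros x Hx. rewrite Rmin_left in Hx by lra. rewrite Rmax_right in Hx by lra.
      apply is_derive_mtau; lra.
    - intros x Hx. rewrite Rmin_left in Hx by lra. rewrite Rmax_right in Hx by lra.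
      unfold Rpower. apply (ex_derive_continuous (V := R_NormedModule)). auto_derive. lra. }
  replace (tau s b - tau s b') with (minus ((fun x => - tau s x) b') ((fun x => - tau s x) b)).
  exact H. unfold minus, plus, opp; simpl; ring.
Qed.

Lemma phi_opp s x : phi s (- x) = phi s x.
Proof. unfold phi; rewrite Rabs_Ropp; reflexivity. Qed.

Lemma is_RInt_phi_neg s a' a : 1 < s -> a' <= a <= 0 ->
  is_RInt (phi s) a' a (tau s (- a) - tau s (- a')).
Proof.
  intros Hs Ha.
  assert (H := is_RInt_phi_pos s (- a) (- a') Hs ltac:(lra)).
  apply (is_RInt_comp_opp (V := R_NormedModule) (phi s) a a') in H.
  apply is_RInt_swap in H. apply is_RInt_opp in H.
  rewrite opp_opp in H.
  eapply is_RInt_ext; [| exact H].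
  intros x _. simpl. unfold opp; simpl. rewrite phi_opp. ring.
Qed.

Lemma tau_le s b : 1 < s -> 0 <= b -> tau s b <= / (s - 1).
Proof.
  intros Hs Hb. unfold tau. unfold Rdiv. rewrite <- (Rmult_1_l (/ (s - 1))) at 2.
  apply Rmult_le_compat_r. left; apply Rinv_0_lt_compat; lra.
  assert (H: Rpower (1 + b) (1 - s) <= Rpower (1 + b) 0) by (apply Rle_Rpower; lra). rewrite Rpower_O in H by lra. exact H.
Qed.

Lemma phi_int_le s a b : 1 < s -> a <= b ->
  exists l, is_RInt (phi s) a b l /\ l <= 2 / (s - 1).
Proof.
  intros Hs Hab.
  assert (T0 := tau_le s 0 Hs (Rle_refl 0)).
  destruct (Rle_dec 0 a) as [Ha|Ha].
  - exists (tau s a - tau s b). split. apply is_RInt_phi_pos; lra.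
    assert (H1 := tau_le s a Hs Ha). assert (H2 := tau_pos s b Hs).
    assert (0 < / (s - 1)) by (apply Rinv_0_lt_compat; lra). unfold Rdiv; lra.
  - destruct (Rle_dec b 0) as [Hb|Hb].
    + exists (tau s (- b) - tau s (- a)). split. apply is_RInt_phi_neg; lra.
      assert (H1 := tau_le s (- b) Hs ltac:(lra)). assert (H2 := tau_pos s (- a) Hs).
      assert (0 < / (s - 1)) by (apply Rinv_0_lt_compat; lra). unfold Rdiv; lra.
    + exists (plus (tau s (- 0) - tau s (- a)) (tau s 0 - tau s b)). split.
      apply (is_RInt_Chasles (V := R_NormedModule)) with 0. apply is_RInt_phi_neg; lra. apply is_RInt_phi_pos; lra.
      unfold plus; simpl. rewrite Ropp_0.
      assert (H1 := tau_pos s (- a) Hs). assert (H2 := tau_pos s b Hs). unfold Rdiv; lra.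
Qed.

Lemma phi_shift_int_le s c a b : 1 < s -> a <= b ->
  exists l, is_RInt (fun x => phi s (x - c)) a b l /\ l <= 2 / (s - 1).
Proof.
  intros Hs Hab. destruct (phi_int_le s (1 * a + - c) (1 * b + - c) Hs ltac:(lra)) as [l [Hl Hle]].
  exists l. split; auto.
  apply (is_RInt_comp_lin (V := R_NormedModule)) in Hl.
  eapply is_RInt_ext; [|exact Hl]. intros x _. simpl. unfold scal; simpl; unfold mult; simpl.
  rewrite Rmult_1_l. f_equal. ring.
Qed.


Notation CV := C_R_CompleteNormedModule.
Definition CInt (f : R -> C) a b : C := RInt (V := CV) f a b.
Definition CIntg (f : R -> C) : C :=
  RInt_gen (V := CV) f (Rbar_locally m_infty) (Rbar_locally p_infty).

Definition cont (f : R -> C) := forall x, continuous f x.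

Definition Dom (f : R -> C) K s :=
  cont f /\ 1 < s /\ 0 <= K /\ forall x, Cmod (f x) <= K * phi s x.

Lemma CInt_ex f a b : cont f -> ex_RInt (V := CV) f a b.
Proof. intros Hf. apply ex_RInt_continuous. intros; apply Hf. Qed.

Lemma CInt_correct f a b : cont f -> is_RInt (V := CV) f a b (CInt f a b).
Proof. intros Hf. apply RInt_correct, CInt_ex, Hf. Qed.

Lemma CInt_bound f g a b lg : a <= b -> cont f ->
  (forall x, a <= x <= b -> Cmod (f x) <= g x) -> is_RInt g a b lg ->
  Cmod (CInt f a b) <= lg.
Proof.
  intros Hab Hf Hg Hl. rewrite Cmod_norm.
  apply (norm_RInt_le (V := CV) f g a b (CInt f a b) lg Hab).
  intros x Hx; rewrite <- Cmod_norm; auto.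
  apply CInt_correct, Hf. exact Hl.
Qed.

Lemma tail_pos f K s b b' : Dom f K s -> 0 <= b <= b' ->
  Cmod (CInt f b b') <= K * tau s b.
Proof.
  intros [Hf [Hs [HK Hb]]] Hbb.
  apply Rle_trans with (K * (tau s b - tau s b')).
  apply CInt_bound with (g := fun x => K * phi s x); auto. lra.
  apply (is_RInt_scal (V := R_NormedModule) (phi s) b b' K).
  apply is_RInt_phi_pos; auto.
  pose proof (tau_pos s b' Hs). nra.
Qed.

Lemma tail_neg f K s a' a : Dom f K s -> a' <= a <= 0 ->
  Cmod (CInt f a' a) <= K * tau s (- a).
Proof.
  intros [Hf [Hs [HK Hb]]] Hbb.
  apply Rle_trans with (K * (tau s (- a) - tau s (- a'))).
  apply CInt_bound with (g := fun x => K * phi s x); auto. lra.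
  apply (is_RInt_scal (V := R_NormedModule) (phi s) a' a K).
  apply is_RInt_phi_neg; auto.
  pose proof (tau_pos s (- a') Hs). nra.
Qed.

Lemma tau_small s e : 1 < s -> 0 < e -> exists L, 0 <= L /\ tau s L < e.
Proof.
  intros Hs He. set (M := / (e * (s - 1) ^ 2)).
  assert (HM : 0 < M) by (unfold M; apply Rinv_0_lt_compat; apply Rmult_lt_0_compat; [lra| apply pow_lt; lra]).
  exists (exp M - 1). split.
  - pose proof (exp_ineq1_le M). lra.
  - unfold tau, Rpower. replace (1 + (exp M - 1)) with (exp M) by ring. rewrite ln_exp.
    replace ((1 - s) * M) with (- ((s - 1) * M)) by ring. rewrite exp_Ropp.
    pose proof (exp_ineq1_le ((s - 1) * M)).
    assert (0 < (s - 1) * M) by (apply Rmult_lt_0_compat; lra).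
    assert (Hk : (s - 1) * (1 + (s - 1) * M) = (s - 1) + / e).
    { unfold M. field. split; lra. }
    apply Rle_lt_trans with (/ (s - 1) / (1 + (s - 1) * M)).
    + unfold Rdiv. rewrite Rmult_comm. apply Rmult_le_compat_l.
      left; apply Rinv_0_lt_compat; lra.
      apply Rinv_le_contravar; lra.
    + unfold Rdiv. rewrite <- Rinv_mult. rewrite Hk.
      rewrite <- (Rinv_inv e) at 2. apply Rinv_lt_contravar.
      pose proof (Rinv_0_lt_compat e He).
      apply Rmult_lt_0_compat; lra. pose proof (Rinv_0_lt_compat e He). lra.
Qed.

Lemma CInt_split f a b L : cont f ->
  CInt f a b = Cplus (Cplus (CInt f a (- L)) (CInt f (- L) L)) (CInt f L b).
Proof.
  intros Hf. unfold CInt.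
  rewrite <- (RInt_Chasles (V := CV) f a (- L) b) by (apply CInt_ex; auto).
  rewrite <- (RInt_Chasles (V := CV) f (- L) L b) by (apply CInt_ex; auto).
  change (Cplus (RInt (V:=CV) f a (- L)) (Cplus (RInt (V:=CV) f (- L) L) (RInt (V:=CV) f L b)) =
     Cplus (Cplus (RInt (V:=CV) f a (- L)) (RInt (V:=CV) f (- L) L)) (RInt (V:=CV) f L b)).
  rewrite Cplus_assoc. reflexivity.
Qed.

Lemma CInt_tails f K s a b L : Dom f K s -> 0 <= L -> a <= - L -> L <= b ->
  Cmod (Cminus (CInt f a b) (CInt f (- L) L)) <= 2 * K * tau s L.
Proof.
  intros HD HL Ha Hb. destruct HD as [Hf HD'].
  rewrite (CInt_split f a b L Hf).
  replace (Cminus (Cplus (Cplus (CInt f a (- L)) (CInt f (- L) L)) (CInt f L b)) (CInt f (- L) L))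
    with (Cplus (CInt f a (- L)) (CInt f L b)) by ring.
  eapply Rle_trans. apply Cmod_triangle.
  pose proof (tail_neg f K s a (- L) (conj Hf HD') ltac:(lra)).
  pose proof (tail_pos f K s L b (conj Hf HD') ltac:(lra)).
  rewrite Ropp_involutive in H. lra.
Qed.

Definition FPI := filter_prod (Rbar_locally m_infty) (Rbar_locally p_infty).

Lemma le_eps_le x y : (forall e, 0 < e -> x <= y + e) -> x <= y.
Proof.
  intros H. destruct (Rle_dec x y); auto.
  specialize (H ((x - y) / 2) ltac:(lra)). lra.
Qed.

Lemma Dom_exists f K s : Dom f K s ->
  exists l, is_RInt_gen (V := CV) f (Rbar_locally m_infty) (Rbar_locally p_infty) l /\
   forall L, 0 <= L -> Cmod (Cminus l (CInt f (- L) L)) <= 2 * K * tau s L.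
Proof.
  intros HD. pose proof HD as [Hf [Hs [HK Hb]]].
  set (F := filtermap (fun ab : R * R => CInt f (fst ab) (snd ab)) FPI).
  assert (PF : ProperFilter F).
  { apply filtermap_proper_filter. apply filter_prod_proper; apply Rbar_locally_filter. }
  assert (CF : cauchy (T := CV) F).
  { intros eps.
    destruct (tau_small s (eps / (2 * K + 1))) as [L [HL HtL]]; auto.
    apply Rdiv_lt_0_compat. apply cond_pos. lra.
    exists (CInt f (- L) L).
    unfold F, filtermap. apply Filter_prod with (fun a => a < - L) (fun b => L < b).
    exists (- L). auto. exists L. auto.
    intros a b Ha Hb'. simpl. apply (norm_compat1 (V := CV)).
    rewrite <- Cmod_norm. eapply Rle_lt_trans. apply (CInt_tails f K s a b L HD); lra.
    apply Rle_lt_trans with ((2 * K + 1) * tau s L).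
    pose proof (tau_pos s L Hs). nra.
    apply Rmult_lt_reg_l with (/ (2 * K + 1)). apply Rinv_0_lt_compat; lra.
    rewrite <- Rmult_assoc, Rinv_l, Rmult_1_l by lra. unfold Rdiv in HtL. lra. }
  set (l := lim (T := CV) F).
  pose proof (complete_cauchy (T := CV) F PF CF) as Hl. fold l in Hl.
  exists l. split.
  - intros P [e He]. unfold filtermapi.
    specialize (Hl e). unfold F, filtermap in Hl.
    eapply filter_imp; [|exact Hl]. intros [a b] Hab. simpl in Hab.
    exists (CInt f a b). split. apply CInt_correct; auto. apply He. exact Hab.
  - intros L HL. apply le_eps_le. intros e He.
    assert (Hnf := norm_factor_gt_0 (K := R_AbsRing) (V := CV)).
    set (e' := mkposreal (e / norm_factor (K := R_AbsRing) (V := CV)) ltac:(apply Rdiv_lt_0_compat; lra)).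
    specialize (Hl e'). unfold F, filtermap in Hl.
    destruct Hl as [Q R' [M1 HQ] [M2 HR] HQR].
    set (a := Rmin (- L) (M1 - 1)). set (b := Rmax L (M2 + 1)).
    assert (Ha1 : a <= - L) by apply Rmin_l. assert (Ha2 : a < M1) by (unfold a; pose proof (Rmin_r (- L) (M1 - 1)); lra).
    assert (Hb1 : L <= b) by apply Rmax_l. assert (Hb2 : M2 < b) by (unfold b; pose proof (Rmax_r L (M2 + 1)); lra).
    specialize (HQR a b (HQ a Ha2) (HR b Hb2)). simpl in HQR.
    apply (norm_compat2 (V := CV) _ _ e') in HQR. rewrite <- Cmod_norm in HQR.
    simpl in HQR. replace (norm_factor * (e / norm_factor)) with e in HQR by (field; lra).
    pose proof (CInt_tails f K s a b L HD HL Ha1 Hb1).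
    replace (Cminus l (CInt f (- L) L)) with
      (Cplus (Cminus l (CInt f a b)) (Cminus (CInt f a b) (CInt f (- L) L))) by ring.
    eapply Rle_trans. apply Cmod_triangle.
    rewrite <- Cmod_opp in HQR.
    assert (E : Cminus l (CInt f a b) = Copp (minus (CInt f a b) l)).
    { unfold minus, plus, opp; simpl. ring. }
    rewrite E. eapply Rle_trans; [apply Rplus_le_compat; [left; exact HQR | exact H] | lra].
Qed.

Lemma Dom_ex f K s : Dom f K s ->
  ex_RInt_gen (V := CV) f (Rbar_locally m_infty) (Rbar_locally p_infty).
Proof. intros HD; destruct (Dom_exists f K s HD) as [l [Hl _]]; exists l; exact Hl. Qed.

Lemma CIntg_approx f K s L : Dom f K s -> 0 <= L ->
  Cmod (Cminus (CIntg f) (CInt f (- L) L)) <= 2 * K * tau s L.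
Proof.
  intros HD HL; destruct (Dom_exists f K s HD) as [l [Hl Hb]].
  unfold CIntg. rewrite (is_RInt_gen_unique (V := CV) f l Hl). auto.
Qed.

Lemma Cmod_small_0 z : (forall e, 0 < e -> Cmod z <= e) -> z = RtoC 0.
Proof.
  intros H. apply Cmod_eq_0. apply Rle_antisym. apply le_eps_le. intros e He.
  rewrite Rplus_0_l; auto. apply Cmod_ge_0.
Qed.

Lemma CIntg_bound f K s B : Dom f K s -> (forall a b, a <= b -> Cmod (CInt f a b) <= B) ->
  Cmod (CIntg f) <= B.
Proof.
  intros HD HB. pose proof HD as [_ [Hs [HK _]]]. apply le_eps_le. intros e He.
  destruct (tau_small s (e / (2 * K + 1))) as [L [HL Ht]]; auto.
  apply Rdiv_lt_0_compat; lra.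
  pose proof (CIntg_approx f K s L HD HL).
  replace (CIntg f) with (Cplus (Cminus (CIntg f) (CInt f (- L) L)) (CInt f (- L) L)) by ring.
  eapply Rle_trans. apply Cmod_triangle.
  pose proof (HB (- L) L ltac:(lra)).
  assert (2 * K * tau s L <= e).
  { apply Rle_trans with ((2 * K + 1) * tau s L). pose proof (tau_pos s L Hs). nra.
    apply Rmult_le_reg_l with (/ (2 * K + 1)). apply Rinv_0_lt_compat; lra.
    rewrite <- Rmult_assoc, Rinv_l, Rmult_1_l by lra. unfold Rdiv in Ht. lra. }
  lra.
Qed.

Lemma Dom_plus f g K1 K2 s : Dom f K1 s -> Dom g K2 s ->
  Dom (fun x => Cplus (f x) (g x)) (K1 + K2) s.
Proof.
  intros [Hf [Hs [HK1 Hb1]]] [Hg [_ [HK2 Hb2]]]. repeat split; auto; try lra.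
  - intros x. apply (continuous_plus (V := C_NormedModule)); auto.
  - intros x. eapply Rle_trans. apply Cmod_triangle. specialize (Hb1 x); specialize (Hb2 x). lra.
Qed.

Lemma locally_C_A (x : C) (P : C -> Prop) :
  locally (T := C_UniformSpace) x P -> locally (T := AbsRing_UniformSpace C_AbsRing) x P.
Proof.
  intros [e He]. exists e. intros y Hy. apply He.
  apply (norm_compat1 (V := C_NormedModule)). exact Hy.
Qed.

Lemma locally_A_C (x : C) (P : C -> Prop) :
  locally (T := AbsRing_UniformSpace C_AbsRing) x P -> locally (T := C_UniformSpace) x P.
Proof.
  intros [e He].
  assert (Hnf := norm_factor_gt_0 (K := C_AbsRing) (V := C_NormedModule)).
  assert (He' : 0 < e / norm_factor (V := C_NormedModule)) by (apply Rdiv_lt_0_compat; [apply cond_pos|lra]).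
  exists (mkposreal _ He'). intros y Hy. apply He.
  apply (norm_compat2 (V := C_NormedModule) x y (mkposreal _ He')) in Hy.
  simpl in Hy. change (Cmod (minus y x) < e).
  replace (pos e) with (norm_factor (K := C_AbsRing) (V := C_NormedModule) * (e / norm_factor (V := C_NormedModule))).
  exact Hy. field. lra.
Qed.

Lemma cont_CA (f : R -> C) x : continuous (U := C_UniformSpace) f x ->
  continuous (U := AbsRing_UniformSpace C_AbsRing) f x.
Proof. intros H P HP. apply H. apply locally_A_C. exact HP. Qed.

Lemma cont_AC (f : R -> C) x : continuous (U := AbsRing_UniformSpace C_AbsRing) f x ->
  continuous (U := C_UniformSpace) f x.
Proof. intros H P HP. apply H. apply locally_C_A. exact HP. Qed.

Lemma cont_mult (f g : R -> C) x : continuous f x -> continuous g x ->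
  continuous (fun y => Cmult (f y) (g y)) x.
Proof.
  intros; apply cont_AC. apply (continuous_mult (K := C_AbsRing)); apply cont_CA; auto.
Qed.

Lemma cont_const (c : C) x : continuous (fun _ : R => c) x.
Proof. apply continuous_const. Qed.

Lemma Dom_scal f K s c : Dom f K s -> Dom (fun x => Cmult c (f x)) (Cmod c * K) s.
Proof.
  intros [Hf [Hs [HK Hb]]]. repeat split; auto.
  - intros x. apply cont_mult; auto. apply cont_const.
  - apply Rmult_le_pos; auto; apply Cmod_ge_0.
  - intros x. rewrite Cmod_mult. rewrite Rmult_assoc. apply Rmult_le_compat_l. apply Cmod_ge_0. auto.
Qed.

Lemma is_RInt_Cscal (f : R -> C) a b l c : is_RInt (V := CV) f a b l ->
  is_RInt (V := CV) (fun x => Cmult c (f x)) a b (Cmult c l).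
Proof.
  intros H.
  pose proof (is_RInt_fct_extend_fst (U := R_NormedModule) (V := R_NormedModule) f a b l H) as H1.
  pose proof (is_RInt_fct_extend_snd (U := R_NormedModule) (V := R_NormedModule) f a b l H) as H2.
  destruct c as [cr ci].
  assert (A1 := is_RInt_minus (V := R_NormedModule) _ _ a b _ _
     (is_RInt_scal (V := R_NormedModule) _ a b cr _ H1) (is_RInt_scal (V := R_NormedModule) _ a b ci _ H2)).
  assert (A2 := is_RInt_plus (V := R_NormedModule) _ _ a b _ _
     (is_RInt_scal (V := R_NormedModule) _ a b ci _ H1) (is_RInt_scal (V := R_NormedModule) _ a b cr _ H2)).
  apply (is_RInt_ext (V := R_NormedModule) _ (fun t => fst (Cmult (cr, ci) (f t)))) in A1.
  2:{ intros x _. destruct (f x) as [u v]. unfold Cmult, minus, plus, scal, opp; simpl.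
      unfold mult, plus, opp; simpl. ring. }
  apply (is_RInt_ext (V := R_NormedModule) _ (fun t => snd (Cmult (cr, ci) (f t)))) in A2.
  2:{ intros x _. destruct (f x) as [u v]. unfold Cmult, minus, plus, scal, opp; simpl.
      unfold mult, plus, opp; simpl. ring. }
  pose proof (is_RInt_fct_extend_pair (U := R_NormedModule) (V := R_NormedModule)
     (fun x => Cmult (cr, ci) (f x)) a b _ _ A1 A2) as H3.
  replace (Cmult (cr, ci) l) with
    (minus (scal cr (fst l)) (scal ci (snd l)), plus (scal ci (fst l)) (scal cr (snd l))).
  exact H3.
  destruct l as [l1 l2]. unfold Cmult, minus, plus, scal, opp; simpl.
  unfold mult, plus, opp; simpl. f_equal; ring.
Qed.

Lemma CInt_plus f g a b : cont f -> cont g ->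
  CInt (fun x => Cplus (f x) (g x)) a b = Cplus (CInt f a b) (CInt g a b).
Proof. intros Hf Hg. unfold CInt. apply (RInt_plus (V := CV)); apply CInt_ex; auto. Qed.

Lemma CInt_scal f c a b : cont f ->
  CInt (fun x => Cmult c (f x)) a b = Cmult c (CInt f a b).
Proof. intros Hf. unfold CInt. apply (is_RInt_unique (V := CV)). apply is_RInt_Cscal. apply CInt_correct; auto. Qed.

Lemma small_tau_K K s e : 1 < s -> 0 <= K -> 0 < e -> exists L, 0 <= L /\ K * tau s L <= e.
Proof.
  intros Hs HK He. destruct (tau_small s (e / (K + 1))) as [L [HL Ht]]; auto.
  apply Rdiv_lt_0_compat; lra. exists L; split; auto.
  apply Rle_trans with ((K + 1) * tau s L). pose proof (tau_pos s L Hs). nra.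
  apply Rmult_le_reg_l with (/ (K + 1)). apply Rinv_0_lt_compat; lra.
  rewrite <- Rmult_assoc, Rinv_l, Rmult_1_l by lra. unfold Rdiv in Ht. lra.
Qed.

Lemma Cmod_minus_le a b : Cmod (Cminus a b) <= Cmod a + Cmod b.
Proof. unfold Cminus. eapply Rle_trans. apply Cmod_triangle. rewrite Cmod_opp. lra. Qed.

Lemma CIntg_plus f g K1 K2 s : Dom f K1 s -> Dom g K2 s ->
  CIntg (fun x => Cplus (f x) (g x)) = Cplus (CIntg f) (CIntg g).
Proof.
  intros Hf Hg. pose proof (Dom_plus f g K1 K2 s Hf Hg) as Hfg.
  pose proof Hf as [cf [Hs [HK1 _]]]. pose proof Hg as [cg [_ [HK2 _]]].
  apply Ceq_minus. apply Cmod_small_0. intros e He.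
  destruct (small_tau_K (4 * (K1 + K2)) s e Hs ltac:(lra) He) as [L [HL Ht]].
  pose proof (CIntg_approx _ _ _ L Hf HL).
  pose proof (CIntg_approx _ _ _ L Hg HL).
  pose proof (CIntg_approx _ _ _ L Hfg HL).
  rewrite CInt_plus in H1 by auto.
  replace (Cminus (CIntg (fun x => Cplus (f x) (g x))) (Cplus (CIntg f) (CIntg g))) with
    (Cminus (Cminus (CIntg (fun x => Cplus (f x) (g x))) (Cplus (CInt f (- L) L) (CInt g (- L) L)))
       (Cplus (Cminus (CIntg f) (CInt f (- L) L)) (Cminus (CIntg g) (CInt g (- L) L)))) by ring.
  eapply Rle_trans. apply Cmod_minus_le.
  eapply Rle_trans. apply Rplus_le_compat_l. apply Cmod_triangle.
  lra.
Qed.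

Lemma CIntg_scal f K s c : Dom f K s ->
  CIntg (fun x => Cmult c (f x)) = Cmult c (CIntg f).
Proof.
  intros Hf. pose proof (Dom_scal f K s c Hf) as Hcf.
  pose proof Hf as [cf [Hs [HK _]]].
  pose proof (Cmod_ge_0 c).
  apply Ceq_minus. apply Cmod_small_0. intros e He.
  destruct (small_tau_K (4 * (Cmod c * K)) s e Hs ltac:(nra) He) as [L [HL Ht]].
  pose proof (CIntg_approx _ _ _ L Hf HL) as H1.
  pose proof (CIntg_approx _ _ _ L Hcf HL) as H2.
  rewrite CInt_scal in H2 by auto.
  replace (Cminus (CIntg (fun x => Cmult c (f x))) (Cmult c (CIntg f))) with
    (Cminus (Cminus (CIntg (fun x => Cmult c (f x))) (Cmult c (CInt f (- L) L)))
       (Cmult c (Cminus (CIntg f) (CInt f (- L) L)))) by ring.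
  eapply Rle_trans. apply Cmod_minus_le. rewrite Cmod_mult.
  assert (Cmod c * Cmod (Cminus (CIntg f) (CInt f (- L) L)) <= Cmod c * (2 * K * tau s L))
    by (apply Rmult_le_compat_l; auto).
  lra.
Qed.

Lemma cont_of_eps (g : R -> C) m0 :
  (forall e, 0 < e -> exists d, 0 < d /\ forall m, Rabs (m - m0) < d -> Cmod (Cminus (g m) (g m0)) < e) ->
  continuous g m0.
Proof.
  intros H P [eps HP]. destruct (H eps (cond_pos eps)) as [d [Hd Hm]].
  exists (mkposreal d Hd). intros m Hmm. apply HP.
  apply (norm_compat1 (V := C_NormedModule)). apply Hm. exact Hmm.
Qed.

Lemma CInt_minus f g a b : cont f -> cont g ->
  CInt (fun x => Cminus (f x) (g x)) a b = Cminus (CInt f a b) (CInt g a b).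
Proof. intros Hf Hg. unfold CInt. apply (RInt_minus (V := CV)); apply CInt_ex; auto. Qed.

Lemma CInt_const_bound h L e : 0 <= L -> cont h -> (forall x, - L <= x <= L -> Cmod (h x) <= e) ->
  Cmod (CInt h (- L) L) <= 2 * L * e.
Proof.
  intros HL Hh Hb. apply CInt_bound with (g := fun _ => e); auto. lra.
  replace (2 * L * e) with (scal (L - - L) e). apply (is_RInt_const (V := R_NormedModule)).
  unfold scal; simpl; unfold mult; simpl; ring.
Qed.

Lemma CIntg_cont (F : R -> R -> C) K s m0 :
  (forall m, Dom (F m) K s) ->
  (forall L e, 0 <= L -> 0 < e -> exists d, 0 < d /\ forall m, Rabs (m - m0) < d ->
       forall x, - L <= x <= L -> Cmod (Cminus (F m x) (F m0 x)) <= e) ->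
  continuous (fun m => CIntg (F m)) m0.
Proof.
  intros HD HU. destruct (HD m0) as [_ [Hs [HK _]]].
  apply cont_of_eps. intros e He.
  destruct (small_tau_K (4 * K) s (e / 2) Hs ltac:(lra) ltac:(lra)) as [L [HL Ht]].
  destruct (HU L (e / (4 * (L + 1))) HL ltac:(apply Rdiv_lt_0_compat; lra)) as [d [Hd Hm]].
  exists d; split; auto. intros m Hmm.
  pose proof (CIntg_approx _ _ _ L (HD m) HL) as H1.
  pose proof (CIntg_approx _ _ _ L (HD m0) HL) as H2.
  assert (H3 : Cmod (Cminus (CInt (F m) (- L) L) (CInt (F m0) (- L) L)) <= 2 * L * (e / (4 * (L + 1)))).
  { rewrite <- CInt_minus by (apply HD). apply CInt_const_bound.
    exact HL. intros x. apply (continuous_minus (V := C_NormedModule)); apply HD.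
    intros x Hx; apply Hm; auto. }
  assert (H4 : 2 * L * (e / (4 * (L + 1))) < e / 2).
  { apply Rmult_lt_reg_l with (4 * (L + 1)). lra. field_simplify; try lra. }
  replace (Cminus (CIntg (F m)) (CIntg (F m0))) with
    (Cplus (Cminus (Cminus (CIntg (F m)) (CInt (F m) (- L) L)) (Cminus (CIntg (F m0)) (CInt (F m0) (- L) L)))
           (Cminus (CInt (F m) (- L) L) (CInt (F m0) (- L) L))) by ring.
  eapply Rle_lt_trans. apply Cmod_triangle.
  eapply Rle_lt_trans. apply Rplus_le_compat_r. apply Cmod_minus_le. lra.
Qed.


Lemma Cmod_im m : Cmod (im m) = Rabs m.
Proof. unfold im. rewrite Cmod_mult, Cmod_Ci, Cmod_R. ring. Qed.

Lemma cont_RtoC x : continuous (fun m : R => RtoC m) x.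
Proof.
  apply cont_of_eps. intros e He. exists e; split; auto. intros m Hm.
  rewrite <- RtoC_minus, Cmod_R. exact Hm.
Qed.

Lemma cont_peval p : cont (fun m => peval p (im m)).
Proof.
  intros x. induction p as [|a p IH]; simpl.
  - apply cont_const.
  - apply (continuous_plus (V := C_NormedModule)). apply cont_const.
    apply cont_mult; auto. unfold im. apply cont_mult. apply cont_const. apply cont_RtoC.
Qed.

Lemma peval_zero p : (forall i, nth i p (RtoC 0) = RtoC 0) -> forall z, peval p z = RtoC 0.
Proof.
  induction p as [|a p IH]; intros H z; simpl. reflexivity.
  assert (Ha : a = RtoC 0) by exact (H 0%nat). rewrite Ha. rewrite IH. ring. intros i. apply (H (S i)).
Qed.

Lemma poly_upper p n : deg_le p n ->
  exists K, 0 <= K /\ forall m, Cmod (peval p (im m)) <= K * (1 + Rabs m) ^ n.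
Proof.
  revert n. induction p as [|a p IH]; intros n Hd.
  - exists 0. split. lra. intros m; simpl. rewrite Cmod_0. lra.
  - destruct n as [|n].
    + exists (Cmod a). split. apply Cmod_ge_0. intros m. simpl.
      rewrite (peval_zero p). rewrite Cmult_0_r, Cplus_0_r. lra.
      intros i. apply (Hd (S i)). lia.
    + destruct (IH n) as [K [HK Hb]].
      { intros i Hi. apply (Hd (S i)). lia. }
      exists (Cmod a + K). split. pose proof (Cmod_ge_0 a). lra.
      intros m. simpl. eapply Rle_trans. apply Cmod_triangle.
      rewrite Cmod_mult, Cmod_im. specialize (Hb m).
      assert (H1 : 1 <= (1 + Rabs m) ^ n) by (apply pow_R1_Rle; pose proof (Rabs_pos m); lra).
      pose proof (Rabs_pos m). pose proof (Cmod_ge_0 a).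
      assert (Rabs m * Cmod (peval p (im m)) <= Rabs m * (K * (1 + Rabs m) ^ n)) by (apply Rmult_le_compat_l; auto).
      set (X := (1 + Rabs m) ^ n) in *.
      assert (Cmod a <= Cmod a * X) by nra.
      assert (0 <= Cmod a * Rabs m * X) by (apply Rmult_le_pos; [apply Rmult_le_pos|]; lra).
      assert (0 <= K * X) by nra.
      replace ((Cmod a + K) * (1 + Rabs m) ^ S n) with
        (Cmod a * X + Cmod a * Rabs m * X + K * X + Rabs m * (K * X)) by (unfold X; simpl; ring).
      lra.
Qed.

Fixpoint cpw (z : C) (n : nat) : C :=
  match n with O => RtoC 1 | S n => Cmult z (cpw z n) end.

Lemma Cmod_cpw z n : Cmod (cpw z n) = Cmod z ^ n.
Proof. induction n; simpl. apply Cmod_1. rewrite Cmod_mult, IHn. reflexivity. Qed.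

Lemma peval_split p d z :
  peval p z = Cplus (peval (firstn d p) z) (Cmult (cpw z d) (peval (skipn d p) z)).
Proof.
  revert p. induction d as [|d IH]; intros p; simpl.
  - ring.
  - destruct p as [|a p]; simpl. ring. rewrite (IH p). ring.
Qed.

Lemma firstn_vanish (p : list C) d i : (d <= i)%nat -> nth i (firstn d p) (RtoC 0) = RtoC 0.
Proof. intros H. apply nth_overflow. pose proof (firstn_le_length d p). lia. Qed.

Lemma peval_head q z : (forall i, (1 <= i)%nat -> nth i q (RtoC 0) = RtoC 0) ->
  peval q z = nth 0 q (RtoC 0).
Proof.
  intros H. destruct q as [|b q]; simpl. reflexivity.
  rewrite (peval_zero q). ring. intros i. apply (H (S i)). lia.
Qed.

Lemma cont_Cmod_peval p x : continuity_pt (fun m => Cmod (peval p (im m))) x.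
Proof.
  apply continuity_pt_filterlim.
  apply (continuous_comp (fun m => peval p (im m)) (fun z => Cmod z)).
  apply cont_peval. apply (filterlim_norm (V := C_NormedModule)).
Qed.

Lemma poly_lower Q d : has_deg Q d -> (forall m, peval Q (im m) <> RtoC 0) ->
  exists c, 0 < c /\ forall m, c * (1 + Rabs m) ^ d <= Cmod (peval Q (im m)).
Proof.
  intros [Hnz Hz] HQ.
  destruct d as [|d'].
  - exists (Cmod (nth 0 Q (RtoC 0))). split. apply Cmod_gt_0; auto.
    intros m. rewrite (peval_head Q). simpl. lra. intros i Hi. apply Hz. lia.
  - set (a := nth (S d') Q (RtoC 0)).
    assert (Ha : 0 < Cmod a) by (apply Cmod_gt_0; auto).
    destruct (poly_upper (firstn (S d') Q) d') as [K [HK HKb]].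
    { intros i Hi. apply firstn_vanish. lia. }
    assert (Hsk : forall z, peval (skipn (S d') Q) z = a).
    { intros z. rewrite peval_head. rewrite nth_skipn. rewrite Nat.add_0_r. reflexivity.
      intros i Hi. rewrite nth_skipn. apply Hz. lia. }
    set (P := 2 ^ (S (S d'))).
    assert (HP : 0 < P) by (apply pow_lt; lra).
    set (M0 := Rmax 1 (P * K / Cmod a)).
    assert (HM01 : 1 <= M0) by apply Rmax_l.
    assert (HM02 : P * K / Cmod a <= M0) by apply Rmax_r.
    destruct (continuity_ab_min (fun m => Cmod (peval Q (im m))) (- M0) M0 ltac:(lra)
       (fun c _ => cont_Cmod_peval Q c)) as [mx [Hmx Hmxr]].
    set (mn := Cmod (peval Q (im mx))).
    assert (Hmn : 0 < mn) by (apply Cmod_gt_0; auto).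
    set (B := (1 + M0) ^ S d').
    assert (HB : 0 < B) by (apply pow_lt; lra).
    exists (Rmin (Cmod a / P) (mn / B)). split.
    { apply Rmin_pos; apply Rdiv_lt_0_compat; auto. }
    intros m. set (X := (1 + Rabs m) ^ S d').
    assert (HX : 0 < X) by (apply pow_lt; pose proof (Rabs_pos m); lra).
    destruct (Rle_dec (Rabs m) M0) as [Hm|Hm].
    + apply Rle_trans with (mn / B * X). apply Rmult_le_compat_r. lra. apply Rmin_r.
      assert (X <= B). { apply pow_incr. pose proof (Rabs_pos m). lra. }
      apply Rle_trans with mn.
      { unfold Rdiv. rewrite Rmult_assoc. rewrite <- (Rmult_1_r mn) at 2.
        apply Rmult_le_compat_l. lra. apply Rmult_le_reg_l with B; auto.
        rewrite <- Rmult_assoc, Rinv_r, Rmult_1_l, Rmult_1_r by lra. auto. }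
      apply Hmx. pose proof (Rabs_maj2 m); pose proof (Rle_abs m); lra.
    + apply Rle_trans with (Cmod a / P * X). apply Rmult_le_compat_r. lra. apply Rmin_l.
      rewrite (peval_split Q (S d')), Hsk.
      assert (E1 : Cmod (Cmult (cpw (im m) (S d')) a) = Rabs m ^ S d' * Cmod a)
        by (rewrite Cmod_mult, Cmod_cpw, Cmod_im; reflexivity).
      assert (E2 : X <= 2 ^ S d' * Rabs m ^ S d').
      { unfold X. rewrite <- Rpow_mult_distr. apply pow_incr. pose proof (Rabs_pos m). lra. }
      assert (E4 : Cmod (peval (firstn (S d') Q) (im m)) <= Cmod a / P * X).
      { eapply Rle_trans. apply HKb.
        assert (K <= Cmod a / P * (1 + Rabs m)).
        { apply Rle_trans with (Cmod a / P * M0).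
          - apply Rmult_le_reg_l with (P / Cmod a). apply Rdiv_lt_0_compat; lra.
            replace (P / Cmod a * (Cmod a / P * M0)) with M0 by (field; lra).
            replace (P / Cmod a * K) with (P * K / Cmod a) by (field; lra). lra.
          - apply Rmult_le_compat_l. left; apply Rdiv_lt_0_compat; lra. lra. }
        unfold X. simpl. rewrite <- Rmult_assoc. apply Rmult_le_compat_r.
        apply pow_le. pose proof (Rabs_pos m); lra. auto. }
      assert (E5 : Cmod a / P * X * 2 <= Rabs m ^ S d' * Cmod a).
      { replace P with (2 * 2 ^ S d') by (unfold P; simpl; ring).
        apply Rle_trans with (Cmod a * (X / 2 ^ S d')).
        right; field. pose proof (pow_lt 2 (S d')); lra.
        rewrite Rmult_comm. apply Rmult_le_compat_r. lra.
        apply Rmult_le_reg_l with (2 ^ S d'). apply pow_lt; lra.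
        replace (2 ^ S d' * (X / 2 ^ S d')) with X by (field; pose proof (pow_lt 2 (S d')); lra). lra. }
      set (lo := peval (firstn (S d') Q) (im m)) in *.
      set (hi := Cmult (cpw (im m) (S d')) a) in *.
      pose proof (Cmod_triangle (Cplus lo hi) (Copp lo)) as T.
      replace (Cplus (Cplus lo hi) (Copp lo)) with hi in T by ring.
      rewrite Cmod_opp in T. lra.
Qed.


Lemma eps_of_cont (g : R -> C) m0 : continuous g m0 ->
  forall e, 0 < e -> exists d, 0 < d /\ forall m, Rabs (m - m0) < d -> Cmod (Cminus (g m) (g m0)) < e.
Proof.
  intros H e He.
  assert (Hnf := norm_factor_gt_0 (K := C_AbsRing) (V := C_NormedModule)).
  assert (He' : 0 < e / norm_factor (V := C_NormedModule)) by (apply Rdiv_lt_0_compat; lra).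
  assert (HP : locally (g m0) (fun w => Cmod (Cminus w (g m0)) < e)).
  { exists (mkposreal _ He'). intros w Hw.
    apply (norm_compat2 (V := C_NormedModule) _ _ (mkposreal _ He')) in Hw.
    simpl in Hw. replace e with (norm_factor (K := C_AbsRing) (V := C_NormedModule) * (e / norm_factor (V := C_NormedModule))) by (field; lra).
    exact Hw. }
  destruct (H _ HP) as [d Hd]. exists d. split. apply cond_pos.
  intros m Hm. apply (Hd m). exact Hm.
Qed.

Lemma cont_Cinv (g : R -> C) : cont g -> (forall m, g m <> RtoC 0) -> cont (fun m => Cinv (g m)).
Proof.
  intros Hg Hnz m0. apply cont_of_eps. intros e He.
  set (w0 := g m0). assert (Hw0 : 0 < Cmod w0) by (apply Cmod_gt_0; apply Hnz).
  destruct (eps_of_cont g m0 (Hg m0) (Rmin (Cmod w0 / 2) (e * Cmod w0 ^ 2 / 2))) as [d [Hd Hm]].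
  { apply Rmin_pos. lra. apply Rdiv_lt_0_compat; [apply Rmult_lt_0_compat; [lra|apply pow_lt; lra]|lra]. }
  exists d; split; auto. intros m Hmd. specialize (Hm m Hmd). fold w0 in Hm.
  set (w := g m) in *.
  assert (Hw : Cmod w0 / 2 <= Cmod w).
  { pose proof (Cmod_triangle w (Cminus w0 w)). replace (Cplus w (Cminus w0 w)) with w0 in H by ring.
    assert (E : Cmod (Cminus w0 w) = Cmod (Cminus w w0)) by (rewrite <- Cmod_opp; f_equal; ring).
    pose proof (Rmin_l (Cmod w0 / 2) (e * Cmod w0 ^ 2 / 2)). lra. }
  assert (Hwnz : w <> RtoC 0) by (apply Hnz).
  replace (Cminus (Cinv w) (Cinv w0)) with (Cmult (Cminus w0 w) (Cinv (Cmult w w0))).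
  2:{ field. split; auto. apply Hnz. }
  rewrite Cmod_mult, Cmod_inv, Cmod_mult.
  2:{ apply Cmult_neq_0; auto. apply Hnz. }
  assert (E : Cmod (Cminus w0 w) = Cmod (Cminus w w0)) by (rewrite <- Cmod_opp; f_equal; ring).
  rewrite E.
  apply Rmult_lt_reg_r with (Cmod w * Cmod w0). apply Rmult_lt_0_compat; lra.
  rewrite Rmult_assoc, Rinv_l, Rmult_1_r by (apply Rgt_not_eq; apply Rmult_lt_0_compat; lra).
  pose proof (Rmin_r (Cmod w0 / 2) (e * Cmod w0 ^ 2 / 2)).
  assert (H2 : Cmod w0 / 2 * Cmod w0 <= Cmod w * Cmod w0) by (apply Rmult_le_compat_r; lra).
  assert (H3 : e * (Cmod w0 / 2 * Cmod w0) <= e * (Cmod w * Cmod w0)) by (apply Rmult_le_compat_l; lra).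
  assert (H4 : e * Cmod w0 ^ 2 / 2 = e * (Cmod w0 / 2 * Cmod w0)) by (simpl; field). lra.
Qed.

Section ESpace.
Variables beta mu : R.
Hypothesis Hbeta : 0 < beta.
Hypothesis Hmu : 1 < mu.

Notation wt := (weight beta mu).

Lemma weight_ge1 m : 1 <= wt m.
Proof.
  unfold weight. apply Rle_trans with (1 * 1). lra.
  pose proof (Rabs_pos m).
  apply Rmult_le_compat; try lra.
  - assert (H1 : Rpower (1 + Rabs m) 0 <= Rpower (1 + Rabs m) mu) by (apply Rle_Rpower; lra).
    rewrite Rpower_O in H1 by lra. exact H1.
  - rewrite <- exp_0. destruct (Rle_lt_or_eq_dec 0 (beta * Rabs m)). nra.
    left; apply exp_increasing; auto. right; rewrite e; reflexivity.
Qed.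

Lemma weight_pos m : 0 < wt m.
Proof. pose proof (weight_ge1 m); lra. Qed.

Lemma wnorm_nonneg f M : wnorm_le beta mu f M -> 0 <= M.
Proof. intros H. specialize (H 0). pose proof (weight_pos 0). pose proof (Cmod_ge_0 (f 0)). nra. Qed.

Lemma wnorm_pt f M m : wnorm_le beta mu f M -> Cmod (f m) <= M / wt m.
Proof.
  intros H. specialize (H m). pose proof (weight_pos m).
  apply Rmult_le_reg_l with (wt m); auto. field_simplify; lra.
Qed.

Lemma wnorm_mono f M M' : M <= M' -> wnorm_le beta mu f M -> wnorm_le beta mu f M'.
Proof. intros H Hf m. specialize (Hf m). lra. Qed.

Lemma wnorm_plus f g M1 M2 : wnorm_le beta mu f M1 -> wnorm_le beta mu g M2 ->
  wnorm_le beta mu (fun m => Cplus (f m) (g m)) (M1 + M2).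
Proof.
  intros Hf Hg m. specialize (Hf m); specialize (Hg m).
  pose proof (weight_pos m). pose proof (Cmod_triangle (f m) (g m)).
  apply Rle_trans with (wt m * (Cmod (f m) + Cmod (g m))). apply Rmult_le_compat_l; lra. lra.
Qed.

Lemma wnorm_mulM (M : R -> C) K f Mf : (forall m, Cmod (M m) <= K) -> wnorm_le beta mu f Mf ->
  wnorm_le beta mu (fun m => Cmult (M m) (f m)) (K * Mf).
Proof.
  intros HM Hf m. specialize (Hf m). specialize (HM m). rewrite Cmod_mult.
  pose proof (weight_pos m). pose proof (Cmod_ge_0 (f m)). pose proof (Cmod_ge_0 (M m)).
  assert (0 <= wt m * Cmod (f m)) by nra.
  replace (wt m * (Cmod (M m) * Cmod (f m))) with (Cmod (M m) * (wt m * Cmod (f m))) by ring.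
  apply Rle_trans with (Cmod (M m) * Mf). apply Rmult_le_compat_l; lra.
  apply Rmult_le_compat_r; [|lra]. lra.
Qed.

Lemma wnorm_scal c f Mf : wnorm_le beta mu f Mf ->
  wnorm_le beta mu (fun m => Cmult c (f m)) (Cmod c * Mf).
Proof. intros H. apply (wnorm_mulM (fun _ => c)). intros; lra. exact H. Qed.

Lemma inE_plus f g : inE beta mu f -> inE beta mu g -> inE beta mu (fun m => Cplus (f m) (g m)).
Proof.
  intros [cf [Mf Hf]] [cg [Mg Hg]]. split.
  intros x. apply (continuous_plus (V := C_NormedModule)); auto.
  exists (Mf + Mg). apply wnorm_plus; auto.
Qed.

Lemma inE_mulM (M : R -> C) K f : cont M -> (forall m, Cmod (M m) <= K) -> inE beta mu f ->
  inE beta mu (fun m => Cmult (M m) (f m)).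
Proof.
  intros cM HM [cf [Mf Hf]]. split.
  intros x. apply cont_mult; auto.
  exists (K * Mf). apply wnorm_mulM; auto.
Qed.

Lemma inE_scal c f : inE beta mu f -> inE beta mu (fun m => Cmult c (f m)).
Proof. intros H. apply (inE_mulM (fun _ => c) (Cmod c)); auto. intros x; apply cont_const. intros; lra. Qed.

Lemma inE_zero : inE beta mu (fun _ => RtoC 0).
Proof. split. intros x; apply cont_const. exists 0. intros m. rewrite Cmod_0. lra. Qed.

End ESpace.


Section Holo.
Variables beta mu eps0 : R.
Hypothesis Hbeta : 0 < beta.
Hypothesis Hmu : 1 < mu.

Notation holo := (holoE beta mu eps0).
Notation E := (inE beta mu).
Notation wn := (wnorm_le beta mu).

Lemma holoE_ext f g : (forall eps m, f eps m = g eps m) -> holo g -> holo f.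
Proof.
  intros H Hg. replace f with g. exact Hg.
  apply functional_extensionality; intros e; apply functional_extensionality; intros m; auto.
Qed.

Lemma holoE_zero : holo (fun _ _ => RtoC 0).
Proof.
  intros e He. split. apply inE_zero. exists (fun _ => RtoC 0). split. apply inE_zero.
  intros eta Heta. exists 1. split. lra. intros z Hz _ m.
  replace (Cminus (Cdiv (Cminus (RtoC 0) (RtoC 0)) z) (RtoC 0)) with (RtoC 0) by (field; auto).
  rewrite Cmod_0. pose proof (weight_pos beta mu Hbeta Hmu m). lra.
Qed.

Lemma holoE_plus f g : holo f -> holo g -> holo (fun e m => Cplus (f e m) (g e m)).
Proof.
  intros Hf Hg e He. destruct (Hf e He) as [Ef [f' [Ef' Df]]]. destruct (Hg e He) as [Eg [g' [Eg' Dg]]].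
  split. apply inE_plus; auto.
  exists (fun m => Cplus (f' m) (g' m)). split. apply inE_plus; auto.
  intros eta Heta. destruct (Df (eta / 2) ltac:(lra)) as [d1 [Hd1 H1]].
  destruct (Dg (eta / 2) ltac:(lra)) as [d2 [Hd2 H2]].
  exists (Rmin d1 d2). split. apply Rmin_pos; auto. intros z Hz Hzd.
  assert (Hz1 : Cmod z < d1) by (pose proof (Rmin_l d1 d2); lra).
  assert (Hz2 : Cmod z < d2) by (pose proof (Rmin_r d1 d2); lra).
  replace eta with (eta / 2 + eta / 2) by field.
  eapply wnorm_mono; [apply Rle_refl|].
  intros m. replace (Cminus (Cdiv (Cminus (Cplus (f (Cplus e z) m) (g (Cplus e z) m)) (Cplus (f e m) (g e m))) z)
      (Cplus (f' m) (g' m))) with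
     (Cplus (Cminus (Cdiv (Cminus (f (Cplus e z) m) (f e m)) z) (f' m))
            (Cminus (Cdiv (Cminus (g (Cplus e z) m) (g e m)) z) (g' m))) by (field; auto).
  revert m. apply wnorm_plus; auto.
Qed.

Lemma holoE_mulM (M : R -> C) K f : cont M -> (forall m, Cmod (M m) <= K) -> holo f ->
  holo (fun e m => Cmult (M m) (f e m)).
Proof.
  intros cM HM Hf e He. destruct (Hf e He) as [Ef [f' [Ef' Df]]].
  assert (HK : 0 <= K) by (pose proof (HM 0); pose proof (Cmod_ge_0 (M 0)); lra).
  split. apply (inE_mulM beta mu Hbeta Hmu M K); auto.
  exists (fun m => Cmult (M m) (f' m)). split. apply (inE_mulM beta mu Hbeta Hmu M K); auto.
  intros eta Heta. destruct (Df (eta / (K + 1)) ltac:(apply Rdiv_lt_0_compat; lra)) as [d1 [Hd1 H1]].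
  exists d1. split; auto. intros z Hz Hzd.
  apply (wnorm_mono beta mu _ (K * (eta / (K + 1)))).
  { apply Rle_trans with ((K + 1) * (eta / (K + 1))). apply Rmult_le_compat_r.
    left; apply Rdiv_lt_0_compat; lra. lra. right; field; lra. }
  intros m. replace (Cminus (Cdiv (Cminus (Cmult (M m) (f (Cplus e z) m)) (Cmult (M m) (f e m))) z)
      (Cmult (M m) (f' m))) with
     (Cmult (M m) (Cminus (Cdiv (Cminus (f (Cplus e z) m) (f e m)) z) (f' m))) by (field; auto).
  revert m. apply (wnorm_mulM beta mu Hbeta Hmu M K); auto.
Qed.

Lemma holoE_scal c f : holo f -> holo (fun e m => Cmult c (f e m)).
Proof. intros H. apply (holoE_mulM (fun _ => c) (Cmod c)); auto. intros x; apply cont_const. intros; lra. Qed.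

Lemma holoE_eps f : holo f -> holo (fun e m => Cmult e (f e m)).
Proof.
  intros Hf e He. destruct (Hf e He) as [Ef [f' [Ef' Df]]].
  split. apply inE_scal; auto.
  exists (fun m => Cplus (f e m) (Cmult e (f' m))). split. apply inE_plus; auto. apply inE_scal; auto.
  destruct Ef' as [_ [Mf Hmf]].
  assert (HMf : 0 <= Mf) by (eapply wnorm_nonneg; eauto).
  intros eta Heta.
  destruct (Df (eta / (2 * (Cmod e + 2))) ltac:(apply Rdiv_lt_0_compat; pose proof (Cmod_ge_0 e); lra)) as [d1 [Hd1 H1]].
  exists (Rmin (Rmin d1 1) (eta / (2 * (Mf + 1)))). split.
  { apply Rmin_pos. apply Rmin_pos; lra. apply Rdiv_lt_0_compat; lra. }
  intros z Hz Hzd.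
  assert (Hz1 : Cmod z < d1) by (pose proof (Rmin_l (Rmin d1 1) (eta / (2 * (Mf + 1)))); pose proof (Rmin_l d1 1); lra).
  assert (Hz2 : Cmod z < 1) by (pose proof (Rmin_l (Rmin d1 1) (eta / (2 * (Mf + 1)))); pose proof (Rmin_r d1 1); lra).
  assert (Hz3 : Cmod z < eta / (2 * (Mf + 1))) by (pose proof (Rmin_r (Rmin d1 1) (eta / (2 * (Mf + 1)))); lra).
  apply (wnorm_mono beta mu _ (Cmod (Cplus e z) * (eta / (2 * (Cmod e + 2))) + Cmod z * Mf)).
  { pose proof (Cmod_triangle e z). pose proof (Cmod_ge_0 e). pose proof (Cmod_ge_0 z).
    assert (Cmod (Cplus e z) * (eta / (2 * (Cmod e + 2))) <= (Cmod e + 2) * (eta / (2 * (Cmod e + 2)))).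
    { apply Rmult_le_compat_r. left; apply Rdiv_lt_0_compat; lra. lra. }
    assert ((Cmod e + 2) * (eta / (2 * (Cmod e + 2))) = eta / 2) by (field; lra).
    assert (Cmod z * Mf <= eta / (2 * (Mf + 1)) * (Mf + 1)).
    { apply Rle_trans with (eta / (2 * (Mf + 1)) * Mf). apply Rmult_le_compat_r; lra.
      apply Rmult_le_compat_l. left; apply Rdiv_lt_0_compat; lra. lra. }
    assert (eta / (2 * (Mf + 1)) * (Mf + 1) = eta / 2) by (field; lra).
    lra. }
  intros m.
  replace (Cminus (Cdiv (Cminus (Cmult (Cplus e z) (f (Cplus e z) m)) (Cmult e (f e m))) z)
      (Cplus (f e m) (Cmult e (f' m)))) with
     (Cplus (Cmult (Cplus e z) (Cminus (Cdiv (Cminus (f (Cplus e z) m) (f e m)) z) (f' m)))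
            (Cmult z (f' m))) by (field; auto).
  revert m. apply (wnorm_plus beta mu Hbeta Hmu). apply (wnorm_scal beta mu Hbeta Hmu); auto. apply (wnorm_scal beta mu Hbeta Hmu); auto.
Qed.

Lemma holoE_Cpow k f : holo f -> holo (fun e m => Cmult (Cpow e k) (f e m)).
Proof.
  intros Hf. induction k as [|k IH].
  - apply holoE_ext with f; auto. intros e m. unfold Cpow; simpl. change one with (RtoC 1). ring.
  - apply holoE_ext with (fun e m => Cmult e (Cmult (Cpow e k) (f e m))).
    intros e m. unfold Cpow; simpl. change mult with Cmult. ring.
    apply holoE_eps; auto.
Qed.

Lemma holoE_sum_n_m (F : nat -> C -> R -> C) a b :
  (forall l, (a <= l <= b)%nat -> holo (F l)) ->
  holo (fun e m => sum_n_m (fun l => F l e m) a b).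
Proof.
  induction b as [|b IH]; intros H.
  - destruct a as [|a].
    + apply holoE_ext with (F 0%nat). intros; rewrite sum_n_n; auto. apply H; lia.
    + apply holoE_ext with (fun _ _ => RtoC 0). intros; rewrite sum_n_m_zero by lia; reflexivity.
      apply holoE_zero.
  - destruct (Compare_dec.le_lt_dec a (S b)) as [Hab|Hab].
    + apply holoE_ext with (fun e m => Cplus (sum_n_m (fun l => F l e m) a b) (F (S b) e m)).
      intros; rewrite sum_n_Sm by lia; reflexivity.
      apply holoE_plus. apply IH. intros; apply H; lia. apply H; lia.
    + apply holoE_ext with (fun _ _ => RtoC 0). intros; rewrite sum_n_m_zero by lia; reflexivity.
      apply holoE_zero.
Qed.

Lemma holoE_sum_n (F : nat -> C -> R -> C) b :
  (forall l, (l <= b)%nat -> holo (F l)) ->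
  holo (fun e m => sum_n (fun l => F l e m) b).
Proof. intros H. unfold sum_n. apply holoE_sum_n_m. intros; apply H; lia. Qed.

Lemma holo_diff f e : holo f -> in_disc eps0 e ->
  exists C d, 0 <= C /\ 0 < d /\ forall z, Cmod z < d ->
     wn (fun m => Cminus (f (Cplus e z) m) (f e m)) (Cmod z * C).
Proof.
  intros Hf He. destruct (Hf e He) as [Ef [f' [[_ [Mf Hmf]] Df]]].
  assert (HMf : 0 <= Mf) by (eapply wnorm_nonneg; eauto).
  destruct (Df 1 ltac:(lra)) as [d [Hd H1]].
  exists (1 + Mf), d. split. lra. split. auto. intros z Hz.
  destruct (Ceq_dec z (RtoC 0)) as [Hz0|Hz0].
  - subst z. rewrite Cmod_0. intros m. replace (Cplus e (RtoC 0)) with e by ring.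
    replace (Cminus (f e m) (f e m)) with (RtoC 0) by ring. rewrite Cmod_0. lra.
  - intros m. replace (Cminus (f (Cplus e z) m) (f e m)) with
      (Cmult z (Cplus (Cminus (Cdiv (Cminus (f (Cplus e z) m) (f e m)) z) (f' m)) (f' m))) by (field; auto).
    revert m. apply (wnorm_scal beta mu Hbeta Hmu). apply (wnorm_plus beta mu Hbeta Hmu); auto.
Qed.

End Holo.


Lemma weight_exp beta mu m :
  weight beta mu m = exp (mu * ln (1 + Rabs m) + beta * Rabs m).
Proof. unfold weight, Rpower. rewrite exp_plus. reflexivity. Qed.

Lemma phi_exp s x : phi s x = exp (- s * ln (1 + Rabs x)).
Proof. reflexivity. Qed.

Lemma pow_exp x n : 0 < x -> x ^ n = exp (INR n * ln x).
Proof. intros H. rewrite <- Rpower_pow by auto. reflexivity. Qed.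

Lemma exp_frac a b c d : exp a * exp b / (exp c * exp d) = exp (a + b - c - d).
Proof.
  unfold Rminus. rewrite !exp_plus, !exp_Ropp. field. split; apply Rgt_not_eq, exp_pos.
Qed.

Lemma exp_rhs a b c d : exp a * exp b * (exp c + exp d) = exp (a + b + c) + exp (a + b + d).
Proof. rewrite !exp_plus. ring. Qed.

Lemma exp_le_compat a b : a <= b -> exp a <= exp b.
Proof. intros H. destruct (Rle_lt_or_eq_dec a b H). left; apply exp_increasing; auto. subst; lra. Qed.

Lemma key_ineq beta mu d m m1 : 0 <= beta -> INR d + 1 < mu ->
  weight beta mu m * (1 + Rabs m1) ^ d / (weight beta mu (m - m1) * weight beta mu m1) <=
  Rpower 2 mu * (1 + Rabs m) ^ d * (phi mu (m1 - m) + phi (mu - INR d) m1).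
Proof.
  intros Hb Hmu.
  pose proof (Rabs_pos m) as P1. pose proof (Rabs_pos m1) as P2. pose proof (Rabs_pos (m - m1)) as P3.
  pose proof (pos_INR d) as Pd.
  rewrite !weight_exp, !phi_exp.
  rewrite (Rabs_minus_sym m1 m).
  set (c := 1 + Rabs m). set (A := 1 + Rabs (m - m1)). set (B := 1 + Rabs m1).
  assert (Hc : 1 <= c) by (unfold c; lra). assert (HA : 1 <= A) by (unfold A; lra).
  assert (HB : 1 <= B) by (unfold B; lra).
  assert (Hlc : 0 <= ln c) by (rewrite <- ln_1; apply ln_le; lra).
  assert (Hl2 : 0 < ln 2) by (pose proof ln_lt_2; lra).
  rewrite (pow_exp B) by lra. rewrite (pow_exp c) by lra. unfold Rpower.
  rewrite exp_frac, exp_rhs.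
  assert (Htri : Rabs m <= Rabs (m - m1) + Rabs m1).
  { replace m with ((m - m1) + m1) at 1 by ring. apply Rabs_triang. }
  assert (Eb : beta * Rabs m <= beta * Rabs (m - m1) + beta * Rabs m1) by nra.
  destruct (Rle_dec (ln c - ln 2) (ln B)) as [Hcase|Hcase].
  - apply Rle_trans with (exp (mu * ln 2 + INR d * ln c + - mu * ln A)).
    2:{ pose proof (exp_pos (mu * ln 2 + INR d * ln c + - (mu - INR d) * ln B)). lra. }
    assert (H1 : (mu - INR d) * (ln c - ln 2) <= (mu - INR d) * ln B) by (apply Rmult_le_compat_l; lra).
    assert (H2 : (mu - INR d) * ln 2 <= mu * ln 2) by (apply Rmult_le_compat_r; lra).
    apply exp_le_compat. lra.
  - assert (HBc : B < c / 2).
    { apply ln_lt_inv. lra. lra. rewrite ln_div by lra. lra. }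
    assert (HAc : c / 2 <= A).
    { unfold A, c. unfold B, c in HBc. pose proof (Rabs_triang_inv m m1). lra. }
    assert (HlA : ln c - ln 2 <= ln A) by (rewrite <- ln_div by lra; apply ln_le; lra).
    apply Rle_trans with (exp (mu * ln 2 + INR d * ln c + - (mu - INR d) * ln B)).
    2:{ pose proof (exp_pos (mu * ln 2 + INR d * ln c + - mu * ln A)). lra. }
    assert (H1 : mu * (ln c - ln 2) <= mu * ln A) by (apply Rmult_le_compat_l; lra).
    assert (H2 : 0 <= INR d * ln c) by (apply Rmult_le_pos; lra).
    apply exp_le_compat. lra.
Qed.


Definition cvf (Rl : list C) (A B : R -> C) (m : R) : R -> C :=
  fun m1 => Cmult (Cmult (A (m - m1)) (peval Rl (im m1))) (B m1).

Definition Tc (Q Rl : list C) (A B : R -> C) (m : R) : C :=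
  Cmult (Cinv (peval Q (im m))) (CIntg (cvf Rl A B m)).

Lemma cont_shift (A : R -> C) m : cont A -> cont (fun x => A (m - x)).
Proof.
  intros HA x. apply (continuous_comp (fun m1 : R => m - m1) A x).
  apply (continuous_minus (V := R_NormedModule)). apply continuous_const. apply continuous_id.
  apply HA.
Qed.

Lemma cvf_cont Rl A B m : cont A -> cont B -> cont (cvf Rl A B m).
Proof.
  intros HA HB x. unfold cvf. apply cont_mult. apply cont_mult. apply cont_shift; auto.
  apply cont_peval. apply HB.
Qed.

Section Conv.
Variables beta mu : R.
Variable degR : nat.
Variable Rl : list C.
Hypothesis Hbeta : 0 < beta.
Hypothesis HmuR : INR degR + 1 < mu.
Hypothesis HRl : deg_le Rl degR.

Let Hmu : 1 < mu.
Proof. pose proof (pos_INR degR); lra. Qed.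

Notation wt := (weight beta mu).
Notation wn := (wnorm_le beta mu).
Let nu := mu - INR degR.

Lemma cvf_pt KR A B a b m m1 :
  (forall m, Cmod (peval Rl (im m)) <= KR * (1 + Rabs m) ^ degR) ->
  wn A a -> wn B b ->
  Cmod (cvf Rl A B m m1) <= a * KR * b * ((1 + Rabs m1) ^ degR / (wt (m - m1) * wt m1)).
Proof.
  intros HK HA HB. unfold cvf. rewrite !Cmod_mult.
  pose proof (wnorm_pt beta mu Hbeta Hmu A a (m - m1) HA) as Hd1.
  pose proof (wnorm_pt beta mu Hbeta Hmu B b m1 HB) as H2.
  pose proof (HK m1) as H3.
  pose proof (weight_pos beta mu Hbeta Hmu (m - m1)). pose proof (weight_pos beta mu Hbeta Hmu m1).
  pose proof (Cmod_ge_0 (A (m - m1))). pose proof (Cmod_ge_0 (B m1)). pose proof (Cmod_ge_0 (peval Rl (im m1))).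
  apply Rle_trans with ((a / wt (m - m1)) * (KR * (1 + Rabs m1) ^ degR) * (b / wt m1)).
  apply Rmult_le_compat; try apply Rmult_le_pos; auto. apply Rmult_le_compat; auto.
  right. field. split; lra.
Qed.

Lemma ratio_phi m m1 : (1 + Rabs m1) ^ degR / (wt (m - m1) * wt m1) <= phi nu m1.
Proof.
  pose proof (weight_ge1 beta mu Hbeta Hmu (m - m1)).
  pose proof (Rabs_pos m1).
  apply Rle_trans with ((1 + Rabs m1) ^ degR / wt m1).
  { unfold Rdiv. apply Rmult_le_compat_l. apply pow_le; lra.
    apply Rinv_le_contravar. apply weight_pos; auto.
    pose proof (weight_pos beta mu Hbeta Hmu m1). nra. }
  rewrite weight_exp, phi_exp, pow_exp by lra. unfold Rdiv. rewrite <- exp_Ropp, <- exp_plus.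
  apply exp_le_compat. unfold nu. pose proof (Rabs_pos m1).
  assert (0 <= beta * Rabs m1) by nra. lra.
Qed.

Lemma cvf_Dom KR A B a b m :
  0 <= KR -> (forall m, Cmod (peval Rl (im m)) <= KR * (1 + Rabs m) ^ degR) ->
  cont A -> cont B -> wn A a -> wn B b -> Dom (cvf Rl A B m) (a * KR * b) nu.
Proof.
  intros HK0 HK cA cB HA HB.
  pose proof (wnorm_nonneg beta mu Hbeta Hmu A a HA). pose proof (wnorm_nonneg beta mu Hbeta Hmu B b HB).
  split. apply cvf_cont; auto. split. unfold nu; lra. split. apply Rmult_le_pos; [apply Rmult_le_pos|]; auto.
  intros m1. eapply Rle_trans. apply (cvf_pt KR A B a b m m1 HK HA HB). apply Rmult_le_compat_l.
  apply Rmult_le_pos; [apply Rmult_le_pos|]; auto. apply ratio_phi.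
Qed.

Variable Q : list C.
Variable degQ : nat.
Hypothesis HQd : has_deg Q degQ.
Hypothesis HQR : (degR <= degQ)%nat.
Hypothesis HQnz : forall m, peval Q (im m) <> RtoC 0.

Lemma Tc_bound : exists C0, 0 <= C0 /\ forall A B a b, cont A -> cont B -> wn A a -> wn B b ->
  wn (Tc Q Rl A B) (C0 * a * b).
Proof.
  destruct (poly_upper Rl degR HRl) as [KR [HK0 HK]].
  destruct (poly_lower Q degQ HQd HQnz) as [cQ [HcQ HQl]].
  assert (Hnu : 1 < nu) by (unfold nu; lra).
  set (S := 2 / (mu - 1) + 2 / (nu - 1)).
  assert (HS : 0 <= S) by (unfold S; assert (0 < 2 / (mu - 1)) by (apply Rdiv_lt_0_compat; lra);
     assert (0 < 2 / (nu - 1)) by (apply Rdiv_lt_0_compat; lra); lra).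
  assert (H2m : 0 < Rpower 2 mu) by apply Rpower_pos'.
  exists (KR * Rpower 2 mu * S / cQ). split.
  { apply Rmult_le_pos. apply Rmult_le_pos. apply Rmult_le_pos; lra. lra. left; apply Rinv_0_lt_compat; lra. }
  intros A B a b cA cB HA HB m.
  pose proof (wnorm_nonneg beta mu Hbeta Hmu A a HA) as Ha. pose proof (wnorm_nonneg beta mu Hbeta Hmu B b HB) as Hb.
  set (c := 1 + Rabs m). assert (Hc : 1 <= c) by (unfold c; pose proof (Rabs_pos m); lra).
  assert (Hw := weight_pos beta mu Hbeta Hmu m).
  set (H := a * KR * b * Rpower 2 mu * c ^ degR / wt m).
  assert (HH : 0 <= H).
  { unfold H. apply Rmult_le_pos. repeat apply Rmult_le_pos; try lra. apply pow_le; lra.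
    left; apply Rinv_0_lt_compat; lra. }
  assert (Step1 : forall m1, Cmod (cvf Rl A B m m1) <= H * (phi mu (m1 - m) + phi nu m1)).
  { intros m1. eapply Rle_trans. apply (cvf_pt KR A B a b m m1 HK HA HB).
    pose proof (key_ineq beta mu degR m m1 ltac:(lra) HmuR) as Hk. fold c nu in Hk.
    unfold H. apply Rle_trans with (a * KR * b * (Rpower 2 mu * c ^ degR * (phi mu (m1 - m) + phi nu m1) / wt m)).
    - apply Rmult_le_compat_l. repeat apply Rmult_le_pos; lra.
      apply Rmult_le_reg_l with (wt m); auto.
      replace (wt m * (Rpower 2 mu * c ^ degR * (phi mu (m1 - m) + phi nu m1) / wt m)) with
        (Rpower 2 mu * c ^ degR * (phi mu (m1 - m) + phi nu m1)) by (field; lra).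
      eapply Rle_trans; [|exact Hk]. right. unfold Rdiv. ring.
    - right. field. lra. }
  assert (Step2 : Cmod (CIntg (cvf Rl A B m)) <= H * S).
  { apply (CIntg_bound _ (a * KR * b) nu). apply cvf_Dom; auto.
    intros a' b' Hab.
    destruct (phi_shift_int_le mu m a' b' Hmu Hab) as [l1 [Hl1 Hl1b]].
    destruct (phi_int_le nu a' b' Hnu Hab) as [l2 [Hl2 Hl2b]].
    apply Rle_trans with (H * (l1 + l2)).
    - apply CInt_bound with (g := fun x => H * (phi mu (x - m) + phi nu x)).
      exact Hab. apply cvf_cont; auto. intros; apply Step1.
      apply (is_RInt_scal (V := R_NormedModule)).
      apply (is_RInt_plus (V := R_NormedModule)); auto.
    - apply Rmult_le_compat_l; auto. unfold S; lra. }
  unfold Tc. rewrite Cmod_mult, Cmod_inv by auto.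
  specialize (HQl m). fold c in HQl.
  assert (Hcd : c ^ degR <= c ^ degQ) by (apply Rle_pow; auto).
  assert (Hcp : 0 < c ^ degR) by (apply pow_lt; lra).
  assert (HQm : 0 < Cmod (peval Q (im m))) by (apply Cmod_gt_0; auto).
  assert (HQl' : cQ * c ^ degR <= Cmod (peval Q (im m))).
  { eapply Rle_trans; [|exact HQl]. apply Rmult_le_compat_l; lra. }
  apply Rle_trans with (wt m * (/ (cQ * c ^ degR) * (H * S))).
  { apply Rmult_le_compat_l. lra. apply Rmult_le_compat.
    left; apply Rinv_0_lt_compat; auto. apply Cmod_ge_0.
    apply Rinv_le_contravar. apply Rmult_lt_0_compat; auto. auto. auto. }
  right. unfold H. field. repeat split; lra.
Qed.

Lemma ratio1 x : (1 + Rabs x) ^ degR / wt x <= phi nu x.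
Proof.
  pose proof (Rabs_pos x).
  rewrite weight_exp, phi_exp, pow_exp by lra. unfold Rdiv. rewrite <- exp_Ropp, <- exp_plus.
  apply exp_le_compat. unfold nu.
  assert (0 <= beta * Rabs x) by nra. lra.
Qed.

Lemma phi_le1 s x : 0 <= s -> phi s x <= 1.
Proof.
  intros Hs. rewrite phi_exp.
  pose proof (Rabs_pos x). assert (0 <= ln (1 + Rabs x)) by (rewrite <- ln_1; apply ln_le; lra).
  apply Rle_trans with (exp 0); [apply exp_le_compat; nra | rewrite exp_0; lra].
Qed.

Lemma CIntg_cvf_cont A B a b : cont A -> cont B -> wn A a -> wn B b ->
  cont (fun m => CIntg (cvf Rl A B m)).
Proof.
  intros cA cB HA HB m0.
  destruct (poly_upper Rl degR HRl) as [KR [HK0 HK]].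
  pose proof (wnorm_nonneg beta mu Hbeta Hmu B b HB) as Hb.
  apply (CIntg_cont _ (a * KR * b) nu).
  { intros m. apply cvf_Dom; auto. }
  intros L e HL He.
  set (G := KR * b + 1). assert (HG : 0 < G) by (unfold G; nra).
  destruct (unifcont_normed_1d (V := C_NormedModule) A (m0 - L - 1) (m0 + L + 1)
     (fun x _ => cA x) (mkposreal (e / G) ltac:(apply Rdiv_lt_0_compat; lra))) as [dl Hdl].
  exists (Rmin dl 1). split. apply Rmin_pos. apply cond_pos. lra.
  intros m Hm x Hx.
  assert (Hm1 : Rabs (m - m0) < dl) by (pose proof (Rmin_l dl 1); lra).
  assert (Hm2 : Rabs (m - m0) < 1) by (pose proof (Rmin_r dl 1); lra).
  assert (Hrange : - 1 < m - m0 < 1) by (apply Rabs_def2 in Hm2; lra).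
  specialize (Hdl (m0 - x) (m - x) ltac:(lra) ltac:(lra)).
  assert (Hball : ball (m0 - x) dl (m - x)).
  { change (Rabs (minus (m - x) (m0 - x)) < dl). unfold minus, plus, opp; simpl.
    replace (m - x + - (m0 - x)) with (m - m0) by ring. auto. }
  specialize (Hdl Hball). unfold ball_norm in Hdl. simpl in Hdl.
  unfold cvf.
  replace (Cminus (Cmult (Cmult (A (m - x)) (peval Rl (im x))) (B x))
                  (Cmult (Cmult (A (m0 - x)) (peval Rl (im x))) (B x)))
    with (Cmult (Cminus (A (m - x)) (A (m0 - x))) (Cmult (peval Rl (im x)) (B x))) by ring.
  rewrite !Cmod_mult.
  assert (Hd1 : Cmod (Cminus (A (m - x)) (A (m0 - x))) <= e / G).
  { left. exact Hdl. }
  assert (H2 : Cmod (peval Rl (im x)) * Cmod (B x) <= G).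
  { pose proof (HK x). pose proof (wnorm_pt beta mu Hbeta Hmu B b x HB).
    pose proof (ratio1 x). pose proof (phi_le1 nu x ltac:(unfold nu; lra)).
    pose proof (weight_pos beta mu Hbeta Hmu x).
    pose proof (Cmod_ge_0 (B x)). pose proof (Cmod_ge_0 (peval Rl (im x))).
    apply Rle_trans with (KR * (1 + Rabs x) ^ degR * (b / wt x)).
    apply Rmult_le_compat; auto.
    apply Rle_trans with (KR * b * ((1 + Rabs x) ^ degR / wt x)). right; field; lra.
    unfold G. assert (0 <= KR * b) by nra. nra. }
  apply Rle_trans with (e / G * G).
  apply Rmult_le_compat; auto; try apply Cmod_ge_0. apply Rmult_le_pos; apply Cmod_ge_0.
  right; field; lra.
Qed.

Lemma Tc_cont A B a b : cont A -> cont B -> wn A a -> wn B b -> cont (Tc Q Rl A B).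
Proof.
  intros cA cB HA HB x. unfold Tc. apply cont_mult.
  apply cont_Cinv. apply cont_peval. auto.
  apply (CIntg_cvf_cont A B a b); auto.
Qed.

Lemma Tc_inE A B : inE beta mu A -> inE beta mu B -> inE beta mu (Tc Q Rl A B).
Proof.
  intros [cA [a HA]] [cB [b HB]]. destruct Tc_bound as [C0 [HC0 HT]].
  split. apply (Tc_cont A B a b); auto. exists (C0 * a * b). apply HT; auto.
Qed.

Lemma inE_Dom A B : inE beta mu A -> inE beta mu B -> forall m, exists K, Dom (cvf Rl A B m) K nu.
Proof.
  intros [cA [a HA]] [cB [b HB]] m.
  destruct (poly_upper Rl degR HRl) as [KR [HK0 HK]].
  exists (a * KR * b). apply cvf_Dom; auto.
Qed.

Lemma Dom_same_s f K1 s g K2 : Dom f K1 s -> Dom g K2 s -> Dom f (K1 + K2) s /\ Dom g (K1 + K2) s.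
Proof.
  intros [c1 [s1 [k1 b1]]] [c2 [s2 [k2 b2]]]. split; repeat split; auto; try lra;
  intros x; [specialize (b1 x)|specialize (b2 x)]; pose proof (phi_pos s x); nra.
Qed.

Lemma CIntg_lin2 f1 f2 c1 c2 K1 K2 s : Dom f1 K1 s -> Dom f2 K2 s ->
  CIntg (fun x => Cplus (Cmult c1 (f1 x)) (Cmult c2 (f2 x))) = Cplus (Cmult c1 (CIntg f1)) (Cmult c2 (CIntg f2)).
Proof.
  intros Hd1 H2.
  rewrite (CIntg_plus _ _ _ _ s (Dom_scal _ _ _ c1 Hd1) (Dom_scal _ _ _ c2 H2)).
  rewrite (CIntg_scal _ _ _ c1 Hd1), (CIntg_scal _ _ _ c2 H2). reflexivity.
Qed.

Lemma Tc_lin_l A A1 A2 B c1 c2 : inE beta mu A1 -> inE beta mu A2 -> inE beta mu B ->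
  (forall x, A x = Cplus (Cmult c1 (A1 x)) (Cmult c2 (A2 x))) ->
  forall m, Tc Q Rl A B m = Cplus (Cmult c1 (Tc Q Rl A1 B m)) (Cmult c2 (Tc Q Rl A2 B m)).
Proof.
  intros E1 E2 EB HA m. unfold Tc.
  destruct (inE_Dom A1 B E1 EB m) as [K1 D1]. destruct (inE_Dom A2 B E2 EB m) as [K2 D2].
  replace (cvf Rl A B m) with (fun x => Cplus (Cmult c1 (cvf Rl A1 B m x)) (Cmult c2 (cvf Rl A2 B m x))).
  rewrite (CIntg_lin2 _ _ c1 c2 K1 K2 nu D1 D2). ring.
  apply functional_extensionality. intros x. unfold cvf. rewrite HA. ring.
Qed.

Lemma Tc_lin_r A B B1 B2 c1 c2 : inE beta mu A -> inE beta mu B1 -> inE beta mu B2 ->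
  (forall x, B x = Cplus (Cmult c1 (B1 x)) (Cmult c2 (B2 x))) ->
  forall m, Tc Q Rl A B m = Cplus (Cmult c1 (Tc Q Rl A B1 m)) (Cmult c2 (Tc Q Rl A B2 m)).
Proof.
  intros EA E1 E2 HB m. unfold Tc.
  destruct (inE_Dom A B1 EA E1 m) as [K1 D1]. destruct (inE_Dom A B2 EA E2 m) as [K2 D2].
  replace (cvf Rl A B m) with (fun x => Cplus (Cmult c1 (cvf Rl A B1 m x)) (Cmult c2 (cvf Rl A B2 m x))).
  rewrite (CIntg_lin2 _ _ c1 c2 K1 K2 nu D1 D2). ring.
  apply functional_extensionality. intros x. unfold cvf. rewrite HB. ring.
Qed.

Lemma wnorm_ext f g M : (forall m, f m = g m) -> wn g M -> wn f M.
Proof. intros H Hg m. rewrite H. apply Hg. Qed.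

Lemma holoE_Tc eps0 A B : holoE beta mu eps0 A -> holoE beta mu eps0 B ->
  holoE beta mu eps0 (fun e m => Tc Q Rl (A e) (B e) m).
Proof.
  intros HA HB e He.
  destruct (HA e He) as [EA0 [A' [EA' DA]]]. destruct (HB e He) as [EB0 [B' [EB' DB]]].
  split. apply Tc_inE; auto.
  exists (fun m => Cplus (Tc Q Rl A' (B e) m) (Tc Q Rl (A e) B' m)). split.
  apply (inE_plus beta mu Hbeta Hmu); apply Tc_inE; auto.
  intros eta Heta.
  destruct Tc_bound as [C0 [HC0 HT]].
  pose proof EA0 as [cA0 [a0 Ha0]]. pose proof EA' as [cA' [a' Ha']].
  pose proof EB0 as [cB0 [b0 Hb0]]. pose proof EB' as [cB' [b' Hb']].
  pose proof (wnorm_nonneg beta mu Hbeta Hmu _ _ Ha0). pose proof (wnorm_nonneg beta mu Hbeta Hmu _ _ Ha').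
  pose proof (wnorm_nonneg beta mu Hbeta Hmu _ _ Hb0).
  destruct (holo_diff beta mu eps0 Hbeta Hmu B e HB He) as [CB [dBd [HCB [HdBd HBd]]]].
  set (K := C0 + 1).
  set (etaA := eta / (3 * K * (b0 + CB + 1))).
  set (etaB := eta / (3 * K * (a0 + 1))).
  set (rz := eta / (3 * K * (a' * CB + 1))).
  assert (HetaA : 0 < etaA) by (unfold etaA, K; apply Rdiv_lt_0_compat; [lra| repeat apply Rmult_lt_0_compat; lra]).
  assert (HetaB : 0 < etaB) by (unfold etaB, K; apply Rdiv_lt_0_compat; [lra| repeat apply Rmult_lt_0_compat; lra]).
  assert (Hrz : 0 < rz) by (unfold rz, K; apply Rdiv_lt_0_compat; [lra| repeat apply Rmult_lt_0_compat; try lra; nra]).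
  destruct (DA etaA HetaA) as [dA [HdA HDA]]. destruct (DB etaB HetaB) as [dB [HdB HDB]].
  assert (He0 : 0 < eps0 - Cmod e) by (unfold in_disc in He; lra).
  exists (Rmin (Rmin (Rmin dA dB) (Rmin dBd 1)) (Rmin rz (eps0 - Cmod e))).
  split. { repeat apply Rmin_pos; lra. }
  intros z Hz0 Hz.
  assert (Hz1 : Cmod z < dA /\ Cmod z < dB /\ Cmod z < dBd /\ Cmod z < 1 /\ Cmod z < rz /\ Cmod z < eps0 - Cmod e).
  { pose proof (Rmin_l (Rmin (Rmin dA dB) (Rmin dBd 1)) (Rmin rz (eps0 - Cmod e))).
    pose proof (Rmin_r (Rmin (Rmin dA dB) (Rmin dBd 1)) (Rmin rz (eps0 - Cmod e))).
    pose proof (Rmin_l (Rmin dA dB) (Rmin dBd 1)). pose proof (Rmin_r (Rmin dA dB) (Rmin dBd 1)).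
    pose proof (Rmin_l dA dB). pose proof (Rmin_r dA dB). pose proof (Rmin_l dBd 1). pose proof (Rmin_r dBd 1).
    pose proof (Rmin_l rz (eps0 - Cmod e)). pose proof (Rmin_r rz (eps0 - Cmod e)). lra. }
  destruct Hz1 as [HzA [HzB [HzBd [Hz1 [Hzr Hze]]]]].
  assert (Hdisc : in_disc eps0 (Cplus e z)).
  { unfold in_disc. pose proof (Cmod_triangle e z). lra. }
  destruct (HA _ Hdisc) as [EA1 _]. destruct (HB _ Hdisc) as [EB1 _].
  set (A0 := A e) in *. set (A1 := A (Cplus e z)) in *. set (B0 := B e) in *. set (B1 := B (Cplus e z)) in *.
  set (G1 := fun m => Cminus (Cdiv (Cminus (A1 m) (A0 m)) z) (A' m)).
  set (G1' := fun m => Cplus (Cmult (Copp (Cinv z)) (A0 m)) (Cmult (Copp (RtoC 1)) (A' m))).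
  set (G2 := fun m => Cminus (Cdiv (Cminus (B1 m) (B0 m)) z) (B' m)).
  set (G2' := fun m => Cplus (Cmult (Copp (Cinv z)) (B0 m)) (Cmult (Copp (RtoC 1)) (B' m))).
  set (Hd1 := fun m => Cplus (Cmult (RtoC 1) (B1 m)) (Cmult (Copp (RtoC 1)) (B0 m))).
  assert (EG1' : inE beta mu G1') by (apply (inE_plus beta mu Hbeta Hmu); apply (inE_scal beta mu Hbeta Hmu); auto).
  assert (EG2' : inE beta mu G2') by (apply (inE_plus beta mu Hbeta Hmu); apply (inE_scal beta mu Hbeta Hmu); auto).
  assert (EG1 : inE beta mu G1).
  { assert (inE beta mu (fun m => Cplus (Cmult (Cinv z) (A1 m)) (Cmult (RtoC 1) (G1' m)))) by
      (apply (inE_plus beta mu Hbeta Hmu); apply (inE_scal beta mu Hbeta Hmu); auto).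
    replace G1 with (fun m => Cplus (Cmult (Cinv z) (A1 m)) (Cmult (RtoC 1) (G1' m))); auto.
    apply functional_extensionality; intros m; unfold G1, G1'. field; auto. }
  assert (EG2 : inE beta mu G2).
  { assert (inE beta mu (fun m => Cplus (Cmult (Cinv z) (B1 m)) (Cmult (RtoC 1) (G2' m)))) by
      (apply (inE_plus beta mu Hbeta Hmu); apply (inE_scal beta mu Hbeta Hmu); auto).
    replace G2 with (fun m => Cplus (Cmult (Cinv z) (B1 m)) (Cmult (RtoC 1) (G2' m))); auto.
    apply functional_extensionality; intros m; unfold G2, G2'. field; auto. }
  assert (EH1 : inE beta mu Hd1) by (apply (inE_plus beta mu Hbeta Hmu); apply (inE_scal beta mu Hbeta Hmu); auto).
  assert (Iden : forall m,
    Cminus (Cdiv (Cminus (Tc Q Rl A1 B1 m) (Tc Q Rl A0 B0 m)) z)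
      (Cplus (Tc Q Rl A' B0 m) (Tc Q Rl A0 B' m)) =
    Cplus (Cplus (Tc Q Rl G1 B1 m) (Tc Q Rl A' Hd1 m)) (Tc Q Rl A0 G2 m)).
  { intros m.
    rewrite (Tc_lin_l G1 A1 G1' B1 (Cinv z) (RtoC 1)) by (auto; intros x; unfold G1, G1'; field; auto).
    rewrite (Tc_lin_l G1' A0 A' B1 (Copp (Cinv z)) (Copp (RtoC 1))) by (auto; intros x; unfold G1'; reflexivity).
    rewrite (Tc_lin_r A' Hd1 B1 B0 (RtoC 1) (Copp (RtoC 1))) by (auto; intros x; unfold Hd1; reflexivity).
    rewrite (Tc_lin_r A0 G2 B1 G2' (Cinv z) (RtoC 1)) by (auto; intros x; unfold G2, G2'; field; auto).
    rewrite (Tc_lin_r A0 G2' B0 B' (Copp (Cinv z)) (Copp (RtoC 1))) by (auto; intros x; unfold G2'; reflexivity).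
    field. auto. }
  apply wnorm_ext with (1 := Iden).
  assert (NG1 : wn G1 etaA) by (apply HDA; auto).
  assert (NG2 : wn G2 etaB) by (apply HDB; auto).
  assert (NH1 : wn Hd1 (Cmod z * CB)).
  { apply wnorm_ext with (g := fun m => Cminus (B (Cplus e z) m) (B e m)).
    intros m; unfold Hd1, B1, B0. ring. apply HBd; auto. }
  assert (NB1 : wn B1 (b0 + Cmod z * CB)).
  { apply wnorm_ext with (g := fun m => Cplus (B0 m) (Hd1 m)).
    intros m; unfold Hd1. ring. apply (wnorm_plus beta mu Hbeta Hmu); auto. }
  destruct EG1 as [cG1 _]. destruct EG2 as [cG2 _]. destruct EH1 as [cH1 _]. destruct EB1 as [cB1 _].
  pose proof (HT G1 B1 etaA (b0 + Cmod z * CB) cG1 cB1 NG1 NB1) as T1.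
  pose proof (HT A' Hd1 a' (Cmod z * CB) cA' cH1 Ha' NH1) as T2.
  pose proof (HT A0 G2 a0 etaB cA0 cG2 Ha0 NG2) as T3.
  eapply wnorm_mono; [| apply (wnorm_plus beta mu Hbeta Hmu); [apply (wnorm_plus beta mu Hbeta Hmu); [exact T1|exact T2]|exact T3]].
  pose proof (Cmod_ge_0 z).
  assert (B1b : C0 * etaA * (b0 + Cmod z * CB) <= eta / 3).
  { apply Rle_trans with (K * etaA * (b0 + CB + 1)).
    { assert (b0 + Cmod z * CB <= b0 + CB + 1) by nra.
      assert (0 <= etaA * (b0 + Cmod z * CB)) by (apply Rmult_le_pos; nra).
      unfold K. rewrite !Rmult_assoc. apply Rmult_le_compat; try lra.
      apply Rmult_le_compat_l; lra. }
    right. unfold etaA. field. unfold K; split; lra. }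
  assert (B2b : C0 * a' * (Cmod z * CB) <= eta / 3).
  { apply Rle_trans with (K * (a' * CB + 1) * Cmod z).
    { assert (0 <= a' * CB) by nra. unfold K.
      replace (C0 * a' * (Cmod z * CB)) with (C0 * (a' * CB) * Cmod z) by ring.
      apply Rmult_le_compat_r; auto. nra. }
    apply Rle_trans with (K * (a' * CB + 1) * rz).
    { apply Rmult_le_compat_l. unfold K; assert (0 <= a' * CB) by nra; nra. lra. }
    right. unfold rz. field. unfold K; split; nra. }
  assert (B3b : C0 * a0 * etaB <= eta / 3).
  { apply Rle_trans with (K * (a0 + 1) * etaB).
    { apply Rmult_le_compat_r. lra. unfold K. nra. }
    right. unfold etaB. field. unfold K; split; lra. }
  lra.
Qed.

End Conv.


Section Main.
Variables (q : R) (k1 k2 : nat) (D : nat) (dD1 dD2 : nat) (d delta Delta : nat -> nat)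
  (Q RD1 RD2 : list C) (Rl : nat -> list C) (p1 : nat)
  (F : nat -> R -> C -> C) (Cc : nat -> nat -> R -> C -> C).
Hypothesis HdD1 : (1 <= dD1)%nat.
Hypothesis HdD2 : (1 <= dD2)%nat.
Hypothesis Hd : forall l, (1 <= l <= D - 1)%nat -> (1 <= d l)%nat.

Definition RHS (W : nat -> R -> C -> C) (eps : C) (n : nat) (m : R) : C :=
  eq_rhs q k1 k2 D dD1 dD2 d delta Delta RD1 RD2 Rl p1 (fun l j m => Cc l j m eps)
    (fun n m => F n m eps) eps (fun n m => W n m eps) n m.

Lemma RHS_local W W' eps n m :
  (forall k, (k < n)%nat -> forall m, W k m eps = W' k m eps) -> RHS W eps n m = RHS W' eps n m.
Proof.
  intros HW. unfold RHS, eq_rhs, fps_add, fps_mulT, fps_mulm, fps_dil, sigma_qT, fps_scal.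
  apply f_equal2.
  { destruct (Nat.leb dD1 n) eqn:E; [|reflexivity]. apply Nat.leb_le in E. rewrite HW by lia. reflexivity. }
  apply f_equal2.
  { destruct (Nat.leb dD2 n) eqn:E; [|reflexivity]. apply Nat.leb_le in E. rewrite HW by lia. reflexivity. }
  apply f_equal2; [|reflexivity].
  apply sum_n_m_ext_loc. intros l Hl. specialize (Hd l Hl).
  apply f_equal2; [reflexivity|].
  destruct (Nat.leb (d l) n) eqn:E; [|reflexivity]. apply Nat.leb_le in E.
  unfold fps_dil. apply f_equal2; [reflexivity|]. unfold fps_conv. apply sum_n_ext. intros j.
  destruct (Nat.leb j (n - d l)) eqn:E2; [|reflexivity]. apply Nat.leb_le in E2.
  assert (Ef : conv_integrand (fun j m => Cc l j m eps) (Rl l) (fun n m => W n m eps) j (n - d l - j) m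
     = conv_integrand (fun j m => Cc l j m eps) (Rl l) (fun n m => W' n m eps) j (n - d l - j) m).
  { unfold conv_integrand. apply functional_extensionality. intros m1. rewrite HW by lia. reflexivity. }
  rewrite Ef. reflexivity.
Qed.

Definition Gs (n : nat) (W : nat -> R -> C -> C) (m : R) (eps : C) : C :=
  Cmult (Cinv (Cmult (peval Q (im m)) (RtoC (q ^ n)))) (RHS W eps n m).

Fixpoint Ub (N : nat) : nat -> R -> C -> C :=
  match N with
  | O => fun _ _ _ => RtoC 0
  | S N' => fun k => if Nat.eqb k N' then Gs N' (Ub N') else Ub N' k
  end.

Definition Usol (n : nat) : R -> C -> C := Ub (S n) n.

Lemma Ub_S N k : Ub (S N) k = if Nat.eqb k N then Gs N (Ub N) else Ub N k.
Proof. reflexivity. Qed.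

Lemma Ub_Usol N k : (k < N)%nat -> Ub N k = Usol k.
Proof.
  induction N as [|N IH]; intros Hk. lia.
  rewrite Ub_S. destruct (Nat.eqb k N) eqn:E.
  - apply Nat.eqb_eq in E. subst. unfold Usol. rewrite Ub_S, Nat.eqb_refl. reflexivity.
  - apply Nat.eqb_neq in E. apply IH. lia.
Qed.

Lemma Usol_eq n m eps : Usol n m eps = Gs n Usol m eps.
Proof.
  unfold Usol at 1. rewrite Ub_S, Nat.eqb_refl. unfold Gs. apply f_equal.
  apply RHS_local. intros k Hk m'. rewrite Ub_Usol by auto. reflexivity.
Qed.

End Main.


Lemma bounded_ratio P degP Q degQ : deg_le P degP -> (degP <= degQ)%nat -> has_deg Q degQ ->
  (forall m, peval Q (im m) <> RtoC 0) ->
  exists K, forall m, Cmod (Cmult (peval P (im m)) (Cinv (peval Q (im m)))) <= K.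
Proof.
  intros HP HPQ HQ HQnz.
  destruct (poly_upper P degP HP) as [KP [HKP HKPb]].
  destruct (poly_lower Q degQ HQ HQnz) as [cQ [HcQ HcQb]].
  exists (KP / cQ). intros m. rewrite Cmod_mult, Cmod_inv by auto.
  pose proof (HKPb m). pose proof (HcQb m).
  set (c := 1 + Rabs m). assert (Hc : 1 <= c) by (unfold c; pose proof (Rabs_pos m); lra).
  fold c in H, H0.
  assert (Hcd : c ^ degP <= c ^ degQ) by (apply Rle_pow; auto).
  assert (Hcp : 0 < c ^ degP) by (apply pow_lt; lra).
  assert (HQm : 0 < Cmod (peval Q (im m))) by (apply Cmod_gt_0; auto).
  apply Rle_trans with (KP * c ^ degP / (cQ * c ^ degP)).
  - unfold Rdiv. apply Rmult_le_compat. apply Cmod_ge_0. left; apply Rinv_0_lt_compat; auto. auto.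
    apply Rinv_le_contravar. apply Rmult_lt_0_compat; auto.
    eapply Rle_trans; [|exact H0]. apply Rmult_le_compat_l; lra.
  - right. field. lra.
Qed.

Lemma cont_ratio P Q : (forall m, peval Q (im m) <> RtoC 0) ->
  cont (fun m => Cmult (peval P (im m)) (Cinv (peval Q (im m)))).
Proof.
  intros HQ x. apply cont_mult. apply cont_peval. apply cont_Cinv. apply cont_peval. auto.
Qed.

Lemma holoE_ratio beta mu eps0 P degP Q degQ (c : C) f : 0 < beta -> 1 < mu ->
  deg_le P degP -> (degP <= degQ)%nat -> has_deg Q degQ ->
  (forall m, peval Q (im m) <> RtoC 0) -> holoE beta mu eps0 f ->
  holoE beta mu eps0 (fun e m => Cmult (Cmult c (Cmult (peval P (im m)) (Cinv (peval Q (im m))))) (f e m)).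
Proof.
  intros Hb Hm HP HPQ HQ HQnz Hf.
  destruct (bounded_ratio P degP Q degQ HP HPQ HQ HQnz) as [K HK].
  apply (holoE_mulM beta mu eps0 Hb Hm _ (Cmod c * K)).
  - intros x. apply cont_mult. apply cont_const. apply cont_ratio; auto.
  - intros m. rewrite Cmod_mult. apply Rmult_le_compat_l. apply Cmod_ge_0. auto.
  - auto.
Qed.


Section Main2.
Variables (q : R) (k1 k2 : nat) (D : nat) (dD1 dD2 : nat) (d delta Delta : nat -> nat)
  (Q RD1 RD2 : list C) (Rl : nat -> list C) (p1 : nat)
  (F : nat -> R -> C -> C) (Cc : nat -> nat -> R -> C -> C)
  (beta mu eps0 : R) (degR degQ : nat).
Hypothesis Hq : 1 < q.
Hypothesis HdD1 : (1 <= dD1)%nat.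
Hypothesis HdD2 : (1 <= dD2)%nat.
Hypothesis Hd : forall l, (1 <= l <= D - 1)%nat -> (1 <= d l)%nat.
Hypothesis HdegRD1 : has_deg RD1 degR.
Hypothesis HdegRD2 : has_deg RD2 degR.
Hypothesis HdegQ : has_deg Q degQ.
Hypothesis HdegQR : (degR <= degQ)%nat.
Hypothesis HdegRl : forall l, (1 <= l <= D - 1)%nat -> deg_le (Rl l) degR.
Hypothesis HQ : forall m : R, peval Q (im m) <> RtoC 0.
Hypothesis Hbeta : 0 < beta.
Hypothesis Hmu : INR degR + 1 < mu.
Hypothesis HF : forall n, holoE beta mu eps0 (fun eps m => F n m eps).
Hypothesis HC : forall l j, (1 <= l <= D - 1)%nat -> (j <= p1)%nat ->
     holoE beta mu eps0 (fun eps m => Cc l j m eps).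

Let Hmu1 : 1 < mu.
Proof. pose proof (pos_INR degR); lra. Qed.

Notation U := (Usol q k1 k2 D dD1 dD2 d delta Delta Q RD1 RD2 Rl p1 F Cc).
Notation G := (Gs q k1 k2 D dD1 dD2 d delta Delta Q RD1 RD2 Rl p1 F Cc).

Lemma RtoC_nz x : x <> 0 -> RtoC x <> RtoC 0.
Proof. intros H E. apply H. injection E. auto. Qed.

Lemma qn_nz n : RtoC (q ^ n) <> RtoC 0.
Proof. apply RtoC_nz. apply pow_nonzero. lra. Qed.

Lemma holoE_cplus (c : R -> C) f g :
  holoE beta mu eps0 (fun e m => Cmult (c m) (f e m)) ->
  holoE beta mu eps0 (fun e m => Cmult (c m) (g e m)) ->
  holoE beta mu eps0 (fun e m => Cmult (c m) (Cplus (f e m) (g e m))).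
Proof.
  intros H1 H2. apply holoE_ext with (fun e m => Cplus (Cmult (c m) (f e m)) (Cmult (c m) (g e m))).
  intros; ring. apply holoE_plus; auto.
Qed.

Lemma deg_of_has P n : has_deg P n -> deg_le P n.
Proof. intros [_ H]; exact H. Qed.

Lemma holo_piece_D (RD : list C) (c1 : R) (dd : nat) n :
  has_deg RD degR ->
  (forall k, (k < n)%nat -> holoE beta mu eps0 (fun eps m => U k m eps)) ->
  (1 <= dd)%nat ->
  holoE beta mu eps0 (fun eps m => Cmult (Cinv (Cmult (peval Q (im m)) (RtoC (q ^ n))))
     (if Nat.leb dd n then Cmult (peval RD (im m)) (Cmult (RtoC (c1 ^ (n - dd))) (U (n - dd) m eps)) else RtoC 0)).
Proof.
  intros HRD IH Hdd.
  destruct (Nat.leb dd n) eqn:E.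
  - apply Nat.leb_le in E.
    apply holoE_ext with (fun e m => Cmult (Cmult (Cmult (Cinv (RtoC (q ^ n))) (RtoC (c1 ^ (n - dd))))
          (Cmult (peval RD (im m)) (Cinv (peval Q (im m))))) (U (n - dd) m e)).
    { intros e m. field. repeat split; first [apply HQ | apply qn_nz]. }
    apply (holoE_ratio beta mu eps0 RD degR Q degQ); auto. apply deg_of_has; auto.
    apply IH. lia.
  - apply holoE_ext with (fun _ _ => RtoC 0). intros; ring. apply holoE_zero; auto.
Qed.

Lemma holo_piece_F n :
  holoE beta mu eps0 (fun eps m => Cmult (Cinv (Cmult (peval Q (im m)) (RtoC (q ^ n))))
     (Cmult (RtoC (q ^ n)) (F n m eps))).
Proof.
  apply holoE_ext with (fun e m => Cmult (Cmult (RtoC 1)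
          (Cmult (peval (RtoC 1 :: nil) (im m)) (Cinv (peval Q (im m))))) (F n m e)).
  { intros e m. simpl. field. repeat split; first [apply HQ | apply qn_nz]. }
  apply (holoE_ratio beta mu eps0 (RtoC 1 :: nil) 0 Q degQ); auto.
  intros i Hi. destruct i as [|[|i]]; simpl; auto; lia. lia.
Qed.

Lemma Csum_mult_l (c : C) (f : nat -> C) a b :
  Cmult c (sum_n_m f a b) = sum_n_m (fun l => Cmult c (f l)) a b.
Proof. symmetry. exact (sum_n_m_mult_l (K := C_Ring) c f a b). Qed.

Lemma holo_piece_S n :
  (forall k, (k < n)%nat -> holoE beta mu eps0 (fun eps m => U k m eps)) ->
  holoE beta mu eps0 (fun eps m => Cmult (Cinv (Cmult (peval Q (im m)) (RtoC (q ^ n))))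
    (sum_n_m (fun l => Cmult (Defs.Cpow eps (Delta l - d l)%nat)
       (if Nat.leb (d l) n then Cmult (RtoC (Rpower q (INR (delta l)) ^ (n - d l)%nat))
          (fps_conv (fun j m => Cc l j m eps) p1 (Rl l) (fun n m => U n m eps) (n - d l)%nat m)
        else RtoC 0)) 1 (D - 1))).
Proof.
  intros IH.
  apply holoE_ext with (fun e m => sum_n_m (fun l => Cmult (Defs.Cpow e (Delta l - d l)%nat)
     (Cmult (Cinv (Cmult (peval Q (im m)) (RtoC (q ^ n))))
       (if Nat.leb (d l) n then Cmult (RtoC (Rpower q (INR (delta l)) ^ (n - d l)%nat))
          (fps_conv (fun j m => Cc l j m e) p1 (Rl l) (fun n m => U n m e) (n - d l)%nat m)
        else RtoC 0))) 1 (D - 1)).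
  { intros e m. rewrite Csum_mult_l. apply sum_n_m_ext. intros l. match goal with |- ?a = ?b => change (@eq C a b) end. ring. }
  apply holoE_sum_n_m; auto. intros l Hl. apply holoE_Cpow; auto.
  destruct (Nat.leb (d l) n) eqn:E.
  2:{ apply holoE_ext with (fun _ _ => RtoC 0). intros; ring. apply holoE_zero; auto. }
  apply Nat.leb_le in E. specialize (Hd l Hl).
  set (n' := (n - d l)%nat).
  unfold fps_conv.
  apply holoE_ext with (fun e m => sum_n (fun j =>
     Cmult (Cmult (Cinv (Cmult (peval Q (im m)) (RtoC (q ^ n)))) (RtoC (Rpower q (INR (delta l)) ^ n')))
       (if Nat.leb j n' then integ (conv_integrand (fun j m => Cc l j m e) (Rl l) (fun n m => U n m e) j (n' - j)%nat m)
        else RtoC 0)) p1).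
  { intros e m. unfold sum_n. rewrite <- Csum_mult_l. apply Cmult_assoc. }
  apply holoE_sum_n; auto. intros j Hj.
  destruct (Nat.leb j n') eqn:E2.
  2:{ apply holoE_ext with (fun _ _ => RtoC 0). intros; ring. apply holoE_zero; auto. }
  apply Nat.leb_le in E2.
  apply holoE_ext with (fun e m => Cmult (Cmult (Cmult (Cinv (RtoC (q ^ n))) (RtoC (Rpower q (INR (delta l)) ^ n')))
      (RtoC (/ sqrt (2 * PI)))) (Tc Q (Rl l) (fun x => Cc l j x e) (fun x => U (n' - j)%nat x e) m)).
  { intros e m. unfold integ, Tc.
    assert (Eint : RInt_gen (V := C_R_CompleteNormedModule)
        (conv_integrand (fun j m => Cc l j m e) (Rl l) (fun n m => U n m e) j (n' - j)%nat m)
        (Rbar_locally m_infty) (Rbar_locally p_infty) =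
      CIntg (cvf (Rl l) (fun x => Cc l j x e) (fun x => U (n' - j)%nat x e) m)) by reflexivity.
    rewrite Eint. field. repeat split; first [apply HQ | apply qn_nz]. }
  apply holoE_scal; auto.
  apply (holoE_Tc beta mu degR (Rl l) Hbeta Hmu (HdegRl l Hl) Q degQ HdegQ HdegQR HQ eps0).
  - apply HC; auto.
  - apply IH. unfold n' in *. lia.
Qed.

Lemma holo_U : forall n, holoE beta mu eps0 (fun eps m => U n m eps).
Proof.
  intros n. induction n as [n IH] using (well_founded_induction Wf_nat.lt_wf).
  apply holoE_ext with (fun eps m => G n U m eps).
  { intros e m. apply Usol_eq; auto. }
  unfold Gs, RHS, eq_rhs, fps_add, fps_mulT, fps_mulm, fps_dil, sigma_qT, fps_scal.
  apply holoE_cplus. apply holo_piece_D; auto.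
  apply holoE_cplus. apply holo_piece_D; auto.
  apply holoE_cplus. apply holo_piece_S; auto.
  apply holo_piece_F.
Qed.

End Main2.


Theorem proposition9
  (q : R) (k1 k2 : nat) (kappa : R)
  (D D1 D2 : nat) (dD1 dD2 : nat) (d delta Delta : nat -> nat)
  (Q RD1 RD2 : list C) (Rl : nat -> list C) (degR degQ : nat)
  (beta mu eps0 : R)
  (F : nat -> R -> C -> C) (CF T0 : R)
  (p1 : nat) (Cc : nat -> nat -> R -> C -> C)
  (Hq : 1 < q)
  (Hk1 : (1 <= k1)%nat) (Hk12 : (k1 < k2)%nat)
  (Hkappa : / kappa = / INR k1 - / INR k2)
  (HD : (3 <= D)%nat) (HD1 : (3 <= D1)%nat) (HD2 : (3 <= D2)%nat)
  (HdD1 : (1 <= dD1)%nat) (HdD2 : (1 <= dD2)%nat)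
  (Hd : forall l, (1 <= l <= D - 1)%nat -> (1 <= d l)%nat)
  (Hdelta : forall l, (1 <= l <= D - 1)%nat -> (1 <= delta l)%nat)
  (Hdelta1 : delta 1%nat = 1%nat)
  (Hdelta_incr : forall l, (1 <= l <= D - 2)%nat -> (delta l < delta (S l))%nat)
  (HDelta : forall l, (1 <= l <= D - 1)%nat -> (d l <= Delta l)%nat)
  (Hc1 : forall l, (1 <= l <= D - 1)%nat -> INR (d l) / INR k2 + 1 >= INR (delta l))
  (Hc2 : forall l, (1 <= l <= D - 1)%nat ->
     (INR dD1 - 1) / kappa - INR (d l) / INR k2 >= INR (delta l) - 1)
  (Hc3 : forall l, (1 <= l <= D - 1)%nat -> (INR dD2 - 1) / INR k2 >= INR (delta l) - 1)
  (Hc4 : (k2 * dD1 < k1 * dD2)%nat)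
  (HdegRD1 : has_deg RD1 degR) (HdegRD2 : has_deg RD2 degR)
  (HdegQ : has_deg Q degQ) (HdegQR : (degR <= degQ)%nat)
  (HdegRl : forall l, (1 <= l <= D - 1)%nat -> deg_le (Rl l) degR)
  (HQ : forall m : R, peval Q (im m) <> RtoC 0)
  (HRD1 : forall m : R, peval RD1 (im m) <> RtoC 0)
  (HRD2 : forall m : R, peval RD2 (im m) <> RtoC 0)
  (Hbeta : 0 < beta) (Hmu : INR degR + 1 < mu)
  (Heps0 : 0 < eps0)
  (HF : forall n, holoE beta mu eps0 (fun eps m => F n m eps))
  (HCF : 0 < CF) (HT0 : 0 < T0)
  (HFbound : forall n eps, in_disc eps0 eps ->
     wnorm_le beta mu (fun m => F n m eps)
       (CF * / T0 ^ n * Rpower (Rpower q (/ INR k1)) (INR n * (INR n - 1) / 2)))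
  (HC : forall l j, (1 <= l <= D - 1)%nat -> (j <= p1)%nat ->
     holoE beta mu eps0 (fun eps m => Cc l j m eps)) :
  let sol := fun (U : nat -> R -> C -> C) =>
    forall eps, in_disc eps0 eps ->
      solves q k1 k2 D dD1 dD2 d delta Delta Q RD1 RD2 Rl p1
        (fun l j m => Cc l j m eps) (fun n m => F n m eps) eps
        (fun n m => U n m eps) in
  (exists U : nat -> R -> C -> C,
     sol U /\ forall n, holoE beta mu eps0 (fun eps m => U n m eps)) /\
  (forall U V : nat -> R -> C -> C, sol U -> sol V ->
     forall n m eps, in_disc eps0 eps -> U n m eps = V n m eps).

Proof.
  intros sol.
  assert (Hmu1 : 1 < mu) by (pose proof (pos_INR degR); lra).
  set (U := Usol q k1 k2 D dD1 dD2 d delta Delta Q RD1 RD2 Rl p1 F Cc).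
  assert (HU : forall n, holoE beta mu eps0 (fun eps m => U n m eps)).
  { apply (holo_U q k1 k2 D dD1 dD2 d delta Delta Q RD1 RD2 Rl p1 F Cc beta mu eps0 degR degQ); auto. }
  assert (Hqn : forall n, RtoC (q ^ n) <> RtoC 0).
  { intros n E. injection E. apply pow_nonzero. lra. }
  split.
  - exists U. split; auto.
    intros eps He. split.
    + intros l Hl n m j Hj Hjn.
      destruct (HC l j Hl Hj eps He) as [EA _].
      destruct (HU (n - j)%nat eps He) as [EB _].
      destruct (inE_Dom beta mu degR (Rl l) Hbeta Hmu (HdegRl l Hl)
          (fun x => Cc l j x eps) (fun x => U (n - j)%nat x eps) EA EB m) as [K HDom].
      exact (Dom_ex _ _ _ HDom).
    + apply functional_extensionality; intros n. apply functional_extensionality; intros m.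
      unfold eq_lhs, fps_mulm, fps_dil.
      unfold U. rewrite Usol_eq by auto. fold U. unfold Gs, RHS.
      field. split; [apply Hqn | apply HQ].
  - intros U1 U2 H1 H2 n. induction n as [n IH] using (well_founded_induction Wf_nat.lt_wf).
    intros m eps He.
    destruct (H1 eps He) as [_ E1]. destruct (H2 eps He) as [_ E2].
    apply (f_equal (fun f => f n m)) in E1. apply (f_equal (fun f => f n m)) in E2.
    unfold eq_lhs, fps_mulm, fps_dil in E1, E2.
    assert (ER : RHS q k1 k2 D dD1 dD2 d delta Delta RD1 RD2 Rl p1 F Cc U1 eps n m =
                 RHS q k1 k2 D dD1 dD2 d delta Delta RD1 RD2 Rl p1 F Cc U2 eps n m).
    { apply RHS_local; auto. }
    unfold RHS in ER. rewrite <- E1, <- E2 in ER.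
    set (a := peval Q (im m)) in *. set (b := RtoC (q ^ n)) in *.
    assert (Ha : a <> RtoC 0) by apply HQ. assert (Hb : b <> RtoC 0) by apply Hqn.
    replace (U1 n m eps) with (Cmult (Cinv (Cmult a b)) (Cmult a (Cmult b (U1 n m eps)))) by (field; auto).
    replace (U2 n m eps) with (Cmult (Cinv (Cmult a b)) (Cmult a (Cmult b (U2 n m eps)))) by (field; auto).
    rewrite ER. reflexivity.
Qed.
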